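(* Let $X$ be a Hilbert space and let $T:X\rightrightarrows X$ be a proper set-valued mapping whose graph $\operatorname{gph}T$ is closed in the norm topology of $X\times X$. Then the following are equivalent: (i) $T$ is maximal monotone on $X$; (ii) $T$ is hypomonotone on $X$ and for every $(u,v)\in\operatorname{gph}T$ one has $\langle z,w\rangle\ge 0$ whenever $w\in X$ and $z\in\widehat D^*T(u,v)(w)$.
   Context: $X$ is a real Hilbert space identified with its dual, with inner product $\langle\cdot,\cdot\rangle$ and norm $\|\cdot\|$. A set-valued mapping $T:X\rightrightarrows X$ has domain $\operatorname{dom}T=\{u: T(u)\neq\emptyset\}$ and graph $\operatorname{gph}T=\{(u,v): v\in T(u)\}$; $T$ is proper if $\operatorname{dom}T\neq\emptyset$. $T$ is monotone if $\langle v_1-v_2,u_1-u_2\rangle\ge0$ for all $(u_1,v_1),(u_2,v_2)\in\operatorname{gph}T$; maximal monotone if it is monotone and $\operatorname{gph}T=\operatorname{gph}S$ for every monotone $S$ with $\operatorname{gph}T\subset\operatorname{gph}S$. $T$ is hypomonotone on $X$ if there is $r>0$ with $\langle v_1-v_2,u_1-u_2\rangle\ge -r\|u_1-u_2\|^2$ for all $(u_1,v_1),(u_2,v_2)\in\operatorname{gph}T$. For a set $\Omega\subset X\times X$ and $\bar p\in\Omega$, the regular (Fréchet) normal cone is $\widehat N(\bar p;\Omega)=\{q: \limsup_{p\to\bar p,\,p\in\Omega}\frac{\langle q,p-\bar p\rangle}{\|p-\bar p\|}\le 0\}$. The regular coderivative of $T$ at $(u,v)\in\operatorname{gph}T$ is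 $\widehat D^*T(u,v)(w)=\{z\in X: (z,-w)\in\widehat N((u,v);\operatorname{gph}T)\}$ for $w\in X$. *)

(* Defs.v *)
From Stdlib Require Import Reals.
Open Scope R_scope.

Record HilbertSpace := {
  hcar :> Type;
  hzero : hcar;
  hadd : hcar -> hcar -> hcar;
  hopp : hcar -> hcar;
  hscal : R -> hcar -> hcar;
  hinner : hcar -> hcar -> R;
  haddA : forall x y z, hadd x (hadd y z) = hadd (hadd x y) z;
  haddC : forall x y, hadd x y = hadd y x;
  hadd0 : forall x, hadd x hzero = x;
  haddN : forall x, hadd x (hopp x) = hzero;
  hscal1 : forall x, hscal 1 x = x;
  hscalA : forall a b x, hscal a (hscal b x) = hscal (a * b) x;
  hscalDr : forall a x y, hscal a (hadd x y) = hadd (hscal a x) (hscal a y);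
  hscalDl : forall a b x, hscal (a + b) x = hadd (hscal a x) (hscal b x);
  hinner_sym : forall x y, hinner x y = hinner y x;
  hinner_addl : forall x y z, hinner (hadd x y) z = hinner x z + hinner y z;
  hinner_scall : forall a x y, hinner (hscal a x) y = a * hinner x y;
  hinner_pos : forall x, 0 <= hinner x x;
  hinner_def : forall x, hinner x x = 0 -> x = hzero;
  hcomplete : forall s : nat -> hcar,
    (forall eps, eps > 0 -> exists N, forall m n, (m >= N)%nat -> (n >= N)%nat ->
        sqrt (hinner (hadd (s m) (hopp (s n))) (hadd (s m) (hopp (s n)))) < eps) ->
    exists l, forall eps, eps > 0 -> exists N, forall n, (n >= N)%nat ->
        sqrt (hinner (hadd (s n) (hopp l)) (hadd (s n) (hopp l))) < eps
}.

Section Defs.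
Context {X : HilbertSpace}.

Definition hsub (x y : X) : X := hadd X x (hopp X y).
Definition hnorm (x : X) : R := sqrt (hinner X x x).

(* set-valued map T : X ⇉ X, encoded by its graph: T u v  <->  v ∈ T(u) *)
Definition setmap := X -> X -> Prop.

Definition dom (T : setmap) (u : X) : Prop := exists v, T u v.
Definition proper (T : setmap) : Prop := exists u, dom T u.

Definition pinner (p q : X * X) : R :=
  hinner X (fst p) (fst q) + hinner X (snd p) (snd q).
Definition psub (p q : X * X) : X * X := (hsub (fst p) (fst q), hsub (snd p) (snd q)).
Definition pnorm (p : X * X) : R := sqrt (pinner p p).

Definition closed_pset (Om : X * X -> Prop) : Prop :=
  forall p, ~ Om p -> exists eps, eps > 0 /\
    forall q, pnorm (psub q p) < eps -> ~ Om q.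

Definition gph (T : setmap) : X * X -> Prop := fun p => T (fst p) (snd p).

Definition monotone (T : setmap) : Prop :=
  forall u1 v1 u2 v2, T u1 v1 -> T u2 v2 ->
    0 <= hinner X (hsub v1 v2) (hsub u1 u2).

Definition maximal_monotone (T : setmap) : Prop :=
  monotone T /\
  forall S : setmap, monotone S -> (forall u v, T u v -> S u v) ->
    forall u v, S u v <-> T u v.

Definition hypomonotone (T : setmap) : Prop :=
  exists r, r > 0 /\ forall u1 v1 u2 v2, T u1 v1 -> T u2 v2 ->
    hinner X (hsub v1 v2) (hsub u1 u2) >= - r * (hnorm (hsub u1 u2))^2.

(* Regular (Fréchet) normal cone: q ∈ N̂(pbar; Om) iff
   limsup_{p -> pbar, p ∈ Om} <q, p - pbar>/||p - pbar|| <= 0,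
   written out with epsilon-delta (points p = pbar are excluded). *)
Definition regular_normal (Om : X * X -> Prop) (pbar q : X * X) : Prop :=
  forall eps, eps > 0 -> exists delta, delta > 0 /\
    forall p, Om p -> 0 < pnorm (psub p pbar) < delta ->
      pinner q (psub p pbar) / pnorm (psub p pbar) <= eps.

(* Regular coderivative: z ∈ D̂*T(u,v)(w) iff (z,-w) ∈ N̂((u,v); gph T). *)
Definition reg_coderiv (T : setmap) (u v w z : X) : Prop :=
  regular_normal (gph T) (u, v) (z, hopp X w).

End Defs.

(* Main.v *)
Require Import Defs.
From Stdlib Require Import Reals Lra Psatz ClassicalEpsilon Classical.
Open Scope R_scope.
Ltac fsolve := field; repeat split; try (intro; lra); try lra.

Lemma pow_le1 x n : 0 <= x <= 1 -> x ^ n <= 1.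
Proof. intros Hx; induction n; simpl; [lra|]. assert (0 <= x^n) by (apply pow_le; lra). nra. Qed.

Section Gen.
Variable H : HilbertSpace.

Lemma ip_addl (x y z : H) : hinner H (hadd H x y) z = hinner H x z + hinner H y z.
Proof. apply hinner_addl. Qed.
Lemma ip_addr (x y z : H) : hinner H x (hadd H y z) = hinner H x y + hinner H x z.
Proof. rewrite !(hinner_sym H x), hinner_addl; reflexivity. Qed.
Lemma ip_scall a (x y : H) : hinner H (hscal H a x) y = a * hinner H x y.
Proof. apply hinner_scall. Qed.
Lemma ip_scalr a (x y : H) : hinner H x (hscal H a y) = a * hinner H x y.
Proof. rewrite !(hinner_sym H x), hinner_scall; reflexivity. Qed.
Lemma ip_0l (y : H) : hinner H (hzero H) y = 0.
Proof.
  assert (E : hadd H (hzero H) (hzero H) = hzero H) by apply hadd0.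
  assert (E2 := f_equal (fun u => hinner H u y) E). simpl in E2.
  rewrite hinner_addl in E2. lra.
Qed.
Lemma ip_0r (y : H) : hinner H y (hzero H) = 0.
Proof. rewrite hinner_sym; apply ip_0l. Qed.
Lemma ip_oppl (x y : H) : hinner H (hopp H x) y = - hinner H x y.
Proof.
  assert (E2 := f_equal (fun u => hinner H u y) (haddN H x)). simpl in E2.
  rewrite hinner_addl, ip_0l in E2. lra.
Qed.
Lemma ip_oppr (x y : H) : hinner H x (hopp H y) = - hinner H x y.
Proof. rewrite !(hinner_sym H x); apply ip_oppl. Qed.
Lemma ip_subl (x y z : H) : hinner H (hsub x y) z = hinner H x z - hinner H y z.
Proof. unfold hsub. rewrite ip_addl, ip_oppl. ring. Qed.
Lemma ip_subr (x y z : H) : hinner H x (hsub y z) = hinner H x y - hinner H x z.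
Proof. unfold hsub. rewrite ip_addr, ip_oppr. ring. Qed.

Lemma sub_zero_eq (x y : H) : hsub x y = hzero H -> x = y.
Proof.
  unfold hsub; intro E.
  rewrite <- (hadd0 H x), <- (haddN H y), haddA, (haddC H x y), <- haddA, E, hadd0.
  reflexivity.
Qed.

Lemma ip_ext (x y : H) : (forall w, hinner H x w = hinner H y w) -> x = y.
Proof.
  intro Hw. apply sub_zero_eq. apply hinner_def.
  rewrite ip_subl, !Hw. ring.
Qed.

Lemma nsq_nonneg (x : H) : 0 <= hinner H x x.
Proof. apply hinner_pos. Qed.

Definition nrm (x : H) := sqrt (hinner H x x).

Lemma nrm_nonneg x : 0 <= nrm x.
Proof. apply sqrt_pos. Qed.
Lemma nrm_sq x : nrm x * nrm x = hinner H x x.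
Proof. apply sqrt_sqrt, nsq_nonneg. Qed.

Lemma ip_expand (x y : H) a :
  hinner H (hadd H x (hscal H a y)) (hadd H x (hscal H a y)) =
  hinner H x x + 2 * a * hinner H x y + a * a * hinner H y y.
Proof.
  rewrite !ip_addl, !ip_addr, !ip_scall, !ip_scalr, (hinner_sym H y x). ring.
Qed.

Lemma CS2 (x y : H) : hinner H x y * hinner H x y <= hinner H x x * hinner H y y.
Proof.
  destruct (Req_dec (hinner H y y) 0) as [E|E].
  - apply hinner_def in E. subst y. rewrite !ip_0r. lra.
  - assert (P := nsq_nonneg y).
    assert (K := nsq_nonneg (hadd H x (hscal H (- (hinner H x y / hinner H y y)) y))).
    rewrite ip_expand in K.
    set (a := hinner H x x) in *. set (b := hinner H y y) in *. set (c := hinner H x y) in *.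
    assert (b > 0) by lra.
    assert (K2 : 0 <= (a - c * c / b)) by (replace (a - c*c/b) with (a + 2 * - (c / b) * c + - (c / b) * - (c / b) * b) by fsolve; exact K).
    assert (K3 : 0 <= a * b - c * c).
    { replace (a*b - c*c) with ((a - c*c/b) * b) by fsolve. apply Rmult_le_pos; lra. }
    lra.
Qed.

Lemma CS (x y : H) : Rabs (hinner H x y) <= nrm x * nrm y.
Proof.
  unfold nrm. rewrite <- sqrt_mult by apply nsq_nonneg.
  rewrite <- sqrt_Rsqr_abs. apply sqrt_le_1_alt. unfold Rsqr. apply CS2.
Qed.
Lemma CS' (x y : H) : hinner H x y <= nrm x * nrm y.
Proof. eapply Rle_trans; [apply Rle_abs|apply CS]. Qed.
Lemma CS'' (x y : H) : - (nrm x * nrm y) <= hinner H x y.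
Proof. assert (K := CS x y). assert (K2 := Rle_abs (- hinner H x y)). rewrite Rabs_Ropp in K2. lra. Qed.

Lemma sqrt_le_sq a b : 0 <= b -> a <= b * b -> sqrt a <= b.
Proof.
  intros Hb Hab. rewrite <- (sqrt_square b) by lra. apply sqrt_le_1_alt. lra.
Qed.

Lemma tri (x y : H) : nrm (hadd H x y) <= nrm x + nrm y.
Proof.
  unfold nrm at 1. apply sqrt_le_sq.
  - assert (A:=nrm_nonneg x); assert (B:=nrm_nonneg y); lra.
  - rewrite !ip_addl, !ip_addr, (hinner_sym H y x).
    assert (K := CS' x y). rewrite <- (nrm_sq x), <- (nrm_sq y). nra.
Qed.

Lemma nrm_scal a (x : H) : nrm (hscal H a x) = Rabs a * nrm x.
Proof.
  unfold nrm. rewrite ip_scall, ip_scalr, <- Rmult_assoc.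
  rewrite sqrt_mult by (try apply nsq_nonneg; nra).
  f_equal. rewrite <- sqrt_Rsqr_abs. reflexivity.
Qed.

Lemma nrm_eq_sq (x y : H) : hinner H x x = hinner H y y -> nrm x = nrm y.
Proof. unfold nrm; intros ->; reflexivity. Qed.

Lemma nrm_sub_sym (x y : H) : nrm (hsub x y) = nrm (hsub y x).
Proof. apply nrm_eq_sq. rewrite !ip_subl, !ip_subr, (hinner_sym H y x). ring. Qed.

Lemma tri_sub (x y z : H) : nrm (hsub x z) <= nrm (hsub x y) + nrm (hsub y z).
Proof.
  replace (hsub x z) with (hadd H (hsub x y) (hsub y z)).
  - apply tri.
  - apply ip_ext; intro w. rewrite ip_addl, !ip_subl. ring.
Qed.

Lemma nrm_self_sub (x : H) : nrm (hsub x x) = 0.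
Proof. unfold nrm. rewrite ip_subl, !ip_subr. replace (_ - _ - _) with 0 by ring. apply sqrt_0. Qed.

Lemma nrm_zero_eq (x y : H) : nrm (hsub x y) = 0 -> x = y.
Proof.
  intro E. apply sub_zero_eq, hinner_def. rewrite <- nrm_sq, E. ring.
Qed.

Definition conv (s : nat -> H) (l : H) :=
  forall eps, eps > 0 -> exists N, forall n, (n >= N)%nat -> nrm (hsub (s n) l) < eps.

Definition seqclosed (S : H -> Prop) :=
  forall s l, (forall n, S (s n)) -> conv s l -> S l.

Lemma half_pow_small eps : eps > 0 -> exists N, forall n, (n >= N)%nat -> (/2)^n < eps.
Proof.
  intro He. destruct (pow_lt_1_zero (/2)) with (y := eps) as [N HN].
  - rewrite Rabs_right; lra.
  - lra.
  - exists N; intros n Hn. specialize (HN n Hn). rewrite Rabs_right in HN; [lra|].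
    apply Rle_ge, pow_le; lra.
Qed.

Lemma geom_cauchy (s : nat -> H) C : 0 <= C ->
  (forall k, nrm (hsub (s (S k)) (s k)) <= C * (/2)^k) ->
  exists l, conv s l /\ (forall k, nrm (hsub (s k) l) <= 2 * C * (/2)^k).
Proof.
  intros HC Hs.
  assert (Hnm : forall n m, nrm (hsub (s (n + m)%nat) (s n)) <= 2*C*(/2)^n - 2*C*(/2)^(n+m)).
  { intros n m; induction m.
    - rewrite Nat.add_0_r, nrm_self_sub. lra.
    - eapply Rle_trans; [apply (tri_sub _ (s (n+m)%nat))|].
      replace (n + S m)%nat with (S (n + m)) by lia.
      specialize (Hs (n+m)%nat). simpl pow. lra. }
  assert (Hb : forall n m, (n <= m)%nat -> nrm (hsub (s m) (s n)) <= 2*C*(/2)^n).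
  { intros n m Hle. replace m with (n + (m - n))%nat by lia.
    eapply Rle_trans; [apply Hnm|]. assert (0 <= (/2)^(n + (m-n))) by (apply pow_le; lra).
    nra. }
  destruct (hcomplete H s) as [l Hl].
  - intros eps He. destruct (half_pow_small (eps / (2*C+1))) as [N HN].
    { apply Rdiv_lt_0_compat; lra. }
    exists N. intros m n Hm Hn.
    assert (HN' := HN N (le_n _)).
    assert (HNp : 2*C*(/2)^N < eps).
    { assert (0 <= (/2)^N) by (apply pow_le; lra).
      apply Rmult_lt_compat_l with (r := 2*C+1) in HN'; [|lra].
      replace ((2*C+1) * (eps / (2*C+1))) with eps in HN' by fsolve. nra. }
    assert (Hmono : forall a, (a >= N)%nat -> (/2)^a <= (/2)^N).
    { intros a Ha. replace a with (N + (a - N))%nat by lia. rewrite pow_add.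
      assert (0 <= (/2)^N) by (apply pow_le; lra).
      assert ((/2)^(a-N) <= 1) by (apply pow_le1; lra). nra. }
    change (nrm (hsub (s m) (s n)) < eps).
    destruct (Nat.le_ge_cases n m).
    + eapply Rle_lt_trans; [apply Hb; auto|]. specialize (Hmono n Hn). nra.
    + rewrite nrm_sub_sym. eapply Rle_lt_trans; [apply Hb; auto|]. specialize (Hmono m Hm). nra.
  - exists l. split.
    + intros eps He. destruct (Hl eps He) as [N HN]. exists N. intros n Hn. apply HN; auto.
    + intro k. apply Rnot_lt_le. intro Hlt.
      set (e := nrm (hsub (s k) l) - 2*C*(/2)^k).
      destruct (Hl e ltac:(unfold e; lra)) as [N HN].
      specialize (HN (max N k) (Nat.le_max_l _ _)).
      assert (A := tri_sub (s k) (s (max N k)) l).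
      assert (B := Hb k (max N k) (Nat.le_max_r _ _)). rewrite nrm_sub_sym in B.
      change (nrm (hsub (s (max N k)) l) < e) in HN. unfold e in HN. lra.
Qed.

Lemma conv_ip_const (s : nat -> H) l w : conv s l -> Un_cv (fun n => hinner H (s n) w) (hinner H l w).
Proof.
  intros Hc eps He.
  destruct (Hc (eps / (nrm w + 1))) as [N HN].
  { assert (0 <= nrm w) by apply nrm_nonneg. apply Rdiv_lt_0_compat; lra. }
  exists N; intros n Hn. unfold Rdist.
  replace (hinner H (s n) w - hinner H l w) with (hinner H (hsub (s n) l) w) by (rewrite ip_subl; ring).
  eapply Rle_lt_trans; [apply CS|].
  specialize (HN n Hn). assert (0 <= nrm w) by apply nrm_nonneg.
  assert (0 <= nrm (hsub (s n) l)) by apply nrm_nonneg.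
  apply Rle_lt_trans with (nrm (hsub (s n) l) * (nrm w + 1)); [nra|].
  apply Rmult_lt_compat_r with (r := nrm w + 1) in HN; [|lra].
  replace (eps / (nrm w + 1) * (nrm w + 1)) with eps in HN by fsolve. lra.
Qed.

Lemma conv_nsq (s : nat -> H) l : conv s l -> Un_cv (fun n => hinner H (s n) (s n)) (hinner H l l).
Proof.
  intros Hc.
  assert (E : forall n, hinner H (s n) (s n) =
     hinner H l l + 2 * hinner H (hsub (s n) l) l + nrm (hsub (s n) l) * nrm (hsub (s n) l)).
  { intro n. rewrite nrm_sq, !ip_subl, !ip_subr, (hinner_sym H l (s n)). ring. }
  intros eps He.
  assert (A : Un_cv (fun n => 2 * hinner H (hsub (s n) l) l + nrm (hsub (s n) l) * nrm (hsub (s n) l)) 0).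
  { replace 0 with (2 * 0 + 0 * 0) by ring. apply CV_plus.
    - apply CV_mult. intros e' He'; exists 0%nat; intros; unfold Rdist; rewrite Rminus_diag, Rabs_R0; lra.
      replace 0 with (hinner H l l - hinner H l l) by ring.
      assert (B := conv_ip_const s l l Hc).
      intros e' He'. destruct (B e' He') as [N HN]. exists N. intros n Hn.
      specialize (HN n Hn). unfold Rdist in *. rewrite ip_subl. replace (hinner H l l - hinner H l l) with 0 by ring.
      replace (hinner H (s n) l - hinner H l l - 0) with (hinner H (s n) l - hinner H l l) by ring. exact HN.
    - apply CV_mult; intros e' He'; destruct (Hc e' He') as [N HN]; exists N; intros n Hn;
        unfold Rdist; rewrite Rminus_0_r, Rabs_right by (apply Rle_ge, nrm_nonneg); auto. }
  destruct (A eps He) as [N HN]. exists N. intros n Hn. specialize (HN n Hn).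
  unfold Rdist in *. rewrite E. replace (hinner H l l + 2 * hinner H (hsub (s n) l) l +
    nrm (hsub (s n) l) * nrm (hsub (s n) l) - hinner H l l) with
   (2 * hinner H (hsub (s n) l) l + nrm (hsub (s n) l) * nrm (hsub (s n) l) - 0) by ring. exact HN.
Qed.

End Gen.

Arguments nrm {H} x.
Arguments conv {H} s l.
Arguments seqclosed {H} S.

Lemma conv_map {H1 H2 : HilbertSpace} (A : H1 -> H2) K (s : nat -> H1) l :
  0 <= K -> (forall n, nrm (hsub (A (s n)) (A l)) <= K * nrm (hsub (s n) l)) ->
  conv s l -> conv (fun n => A (s n)) (A l).
Proof.
  intros HK HA Hc eps He. destruct (Hc (eps / (K+1))) as [N HN].
  { apply Rdiv_lt_0_compat; lra. }
  exists N; intros n Hn. eapply Rle_lt_trans; [apply HA|].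
  specialize (HN n Hn). assert (0 <= nrm (hsub (s n) l)) by apply nrm_nonneg.
  apply Rle_lt_trans with (nrm (hsub (s n) l) * (K + 1)); [nra|].
  apply Rmult_lt_compat_r with (r := K + 1) in HN; [|lra].
  replace (eps / (K + 1) * (K + 1)) with eps in HN by fsolve. lra.
Qed.


Lemma sqrt_plus_le a b : 0 <= a -> 0 <= b -> sqrt (a + b) <= sqrt a + sqrt b.
Proof.
  intros Ha Hb. apply sqrt_le_sq.
  - assert (0 <= sqrt a) by apply sqrt_pos; assert (0 <= sqrt b) by apply sqrt_pos; lra.
  - assert (0 <= sqrt a) by apply sqrt_pos; assert (0 <= sqrt b) by apply sqrt_pos.
    assert (sqrt a * sqrt a = a) by (apply sqrt_sqrt; lra).
    assert (sqrt b * sqrt b = b) by (apply sqrt_sqrt; lra). nra.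
Qed.

Definition prodH (A B : HilbertSpace) : HilbertSpace.
Proof.
  refine {| hcar := (hcar A * hcar B)%type;
            hzero := (hzero A, hzero B);
            hadd := fun p q => (hadd A (fst p) (fst q), hadd B (snd p) (snd q));
            hopp := fun p => (hopp A (fst p), hopp B (snd p));
            hscal := fun a p => (hscal A a (fst p), hscal B a (snd p));
            hinner := fun p q => hinner A (fst p) (fst q) + hinner B (snd p) (snd q) |}.
  - intros [] [] []; simpl; f_equal; apply haddA.
  - intros [] []; simpl; f_equal; apply haddC.
  - intros []; simpl; f_equal; apply hadd0.
  - intros []; simpl; f_equal; apply haddN.
  - intros []; simpl; f_equal; apply hscal1.
  - intros a b []; simpl; f_equal; apply hscalA.
  - intros a [] []; simpl; f_equal; apply hscalDr.
  - intros a b []; simpl; f_equal; apply hscalDl.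
  - intros [] []; simpl; f_equal; apply hinner_sym.
  - intros [] [] []; simpl; rewrite !hinner_addl; ring.
  - intros a [] []; simpl; rewrite !hinner_scall; ring.
  - intros []; simpl. assert (A1 := hinner_pos A h); assert (B1 := hinner_pos B h0); lra.
  - intros [a b]; simpl. intro E. assert (A1 := hinner_pos A a); assert (B1 := hinner_pos B b).
    f_equal; apply hinner_def; lra.
  - intros s Hs.
    destruct (hcomplete A (fun n => fst (s n))) as [la Hla].
    { intros eps He. destruct (Hs eps He) as [N HN]. exists N. intros m n Hm Hn.
      specialize (HN m n Hm Hn). simpl in HN. eapply Rle_lt_trans; [|exact HN].
      apply sqrt_le_1_alt. assert (K := hinner_pos B (hadd B (snd (s m)) (hopp B (snd (s n))))). lra. }
    destruct (hcomplete B (fun n => snd (s n))) as [lb Hlb].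
    { intros eps He. destruct (Hs eps He) as [N HN]. exists N. intros m n Hm Hn.
      specialize (HN m n Hm Hn). simpl in HN. eapply Rle_lt_trans; [|exact HN].
      apply sqrt_le_1_alt. assert (K := hinner_pos A (hadd A (fst (s m)) (hopp A (fst (s n))))). lra. }
    exists (la, lb). intros eps He.
    destruct (Hla (eps/2)) as [N1 H1]; [lra|]. destruct (Hlb (eps/2)) as [N2 H2]; [lra|].
    exists (max N1 N2). intros n Hn. simpl.
    eapply Rle_lt_trans; [apply sqrt_plus_le; apply hinner_pos|].
    specialize (H1 n ltac:(lia)). specialize (H2 n ltac:(lia)). simpl in H1, H2. lra.
Defined.

Definition Rspace : HilbertSpace.
Proof.
  refine {| hcar := R; hzero := 0; hadd := Rplus; hopp := Ropp; hscal := Rmult;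
            hinner := Rmult |}; intros; try ring.
  - nra.
  - nra.
  - destruct (R_complete s) as [l Hl].
    { intros eps He. destruct (H eps He) as [N HN]. exists N. intros n m Hn Hm.
      specialize (HN n m Hn Hm). unfold Rdist. rewrite <- sqrt_Rsqr_abs. unfold Rsqr.
      replace (s n - s m) with (s n + - s m) by ring. exact HN. }
    exists l. intros eps He. destruct (Hl eps He) as [N HN]. exists N. intros n Hn.
    specialize (HN n Hn). unfold Rdist in HN. rewrite <- sqrt_Rsqr_abs in HN. unfold Rsqr in HN.
    replace (s n + - l) with (s n - l) by ring. exact HN.
Defined.

Lemma nrm_fst (A B : HilbertSpace) (p q : prodH A B) :
  nrm (hsub (fst p) (fst q)) <= nrm (hsub p q).
Proof.
  unfold nrm, hsub. simpl. apply sqrt_le_1_alt.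
  assert (K := hinner_pos B (hadd B (snd p) (hopp B (snd q)))). lra.
Qed.
Lemma nrm_snd (A B : HilbertSpace) (p q : prodH A B) :
  nrm (hsub (snd p) (snd q)) <= nrm (hsub p q).
Proof.
  unfold nrm, hsub. simpl. apply sqrt_le_1_alt.
  assert (K := hinner_pos A (hadd A (fst p) (hopp A (fst q)))). lra.
Qed.
Lemma nrm_pair (A B : HilbertSpace) (p q : prodH A B) :
  nrm (hsub p q) <= nrm (hsub (fst p) (fst q)) + nrm (hsub (snd p) (snd q)).
Proof. unfold nrm, hsub. simpl. apply sqrt_plus_le; apply hinner_pos. Qed.

Lemma conv_fst (A B : HilbertSpace) (s : nat -> prodH A B) l :
  conv s l -> conv (fun n => fst (s n)) (fst l).
Proof.
  intros Hc eps He. destruct (Hc eps He) as [N HN]. exists N; intros n Hn.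
  eapply Rle_lt_trans; [apply nrm_fst|apply HN; auto].
Qed.
Lemma conv_snd (A B : HilbertSpace) (s : nat -> prodH A B) l :
  conv s l -> conv (fun n => snd (s n)) (snd l).
Proof.
  intros Hc eps He. destruct (Hc eps He) as [N HN]. exists N; intros n Hn.
  eapply Rle_lt_trans; [apply nrm_snd|apply HN; auto].
Qed.
Lemma conv_pair (A B : HilbertSpace) (s : nat -> prodH A B) l :
  conv (fun n => fst (s n)) (fst l) -> conv (fun n => snd (s n)) (snd l) -> conv s l.
Proof.
  intros H1 H2 eps He. destruct (H1 (eps/2)) as [N1 K1]; [lra|]. destruct (H2 (eps/2)) as [N2 K2]; [lra|].
  exists (max N1 N2); intros n Hn. eapply Rle_lt_trans; [apply nrm_pair|].
  specialize (K1 n ltac:(lia)); specialize (K2 n ltac:(lia)). lra.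
Qed.

Lemma R_nrm (x : Rspace) : nrm x = Rabs x.
Proof. unfold nrm. simpl. rewrite <- sqrt_Rsqr_abs. reflexivity. Qed.
Lemma R_sub (x y : Rspace) : hsub x y = (x - y)%R.
Proof. reflexivity. Qed.


Lemma nrm_sub_le (H : HilbertSpace) (a b : H) : nrm (hsub a b) <= nrm a + nrm b.
Proof.
  unfold hsub. eapply Rle_trans; [apply tri|].
  replace (nrm (hopp H b)) with (nrm b); [lra|].
  apply nrm_eq_sq. rewrite ip_oppl, ip_oppr. ring.
Qed.

Lemma conv_sub (H : HilbertSpace) (s t : nat -> H) l m :
  conv s l -> conv t m -> conv (fun n => hsub (s n) (t n)) (hsub l m).
Proof.
  intros H1 H2 eps He. destruct (H1 (eps/2)) as [N1 K1]; [lra|]. destruct (H2 (eps/2)) as [N2 K2]; [lra|].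
  exists (max N1 N2); intros n Hn.
  replace (hsub (hsub (s n) (t n)) (hsub l m)) with (hsub (hsub (s n) l) (hsub (t n) m)).
  - eapply Rle_lt_trans; [apply nrm_sub_le|].
    specialize (K1 n ltac:(lia)); specialize (K2 n ltac:(lia)). lra.
  - apply ip_ext; intro w. rewrite !ip_subl. ring.
Qed.

Lemma conv_shift (H : HilbertSpace) (s : nat -> H) l : conv s l -> conv (fun n => s (S n)) l.
Proof. intros Hc eps He. destruct (Hc eps He) as [N HN]. exists N. intros n Hn. apply HN. lia. Qed.

Lemma conv_const (H : HilbertSpace) (l : H) : conv (fun _ => l) l.
Proof. intros eps He. exists 0%nat. intros. rewrite nrm_self_sub. lra. Qed.

Lemma pow_cv0 x : 0 <= x < 1 -> Un_cv (fun k => x ^ k) 0.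
Proof.
  intros Hx eps He. destruct (pow_lt_1_zero x) with (y := eps) as [N HN].
  - rewrite Rabs_right; lra.
  - lra.
  - exists N; intros n Hn. unfold Rdist. rewrite Rminus_0_r. apply HN; auto.
Qed.

Lemma cv_const c : Un_cv (fun _ => c) c.
Proof. intros eps He; exists 0%nat; intros; unfold Rdist; rewrite Rminus_diag, Rabs_R0; lra. Qed.

Lemma cv_eq u l l' : Un_cv u l -> l = l' -> Un_cv u l'.
Proof. intros; subst; auto. Qed.

Lemma cv_shift u l : Un_cv u l -> Un_cv (fun n => u (S n)) l.
Proof. intros Hc eps He. destruct (Hc eps He) as [N HN]. exists N. intros n Hn. apply HN. lia. Qed.

Lemma recenter (H : HilbertSpace) (a mu : R) (c w z z' : H) : a + mu <> 0 ->
  (a+mu) * hinner H (hsub z (hadd H c (hscal H (mu/(a+mu)) (hsub w c))))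
                    (hsub z (hadd H c (hscal H (mu/(a+mu)) (hsub w c))))
  - (a+mu) * hinner H (hsub z' (hadd H c (hscal H (mu/(a+mu)) (hsub w c))))
                    (hsub z' (hadd H c (hscal H (mu/(a+mu)) (hsub w c))))
  = a * hinner H (hsub z c) (hsub z c) + mu * hinner H (hsub z w) (hsub z w)
    - a * hinner H (hsub z' c) (hsub z' c) - mu * hinner H (hsub z' w) (hsub z' w).
Proof.
  intro Ha.
  rewrite !ip_subl, !ip_subr, !ip_addl, !ip_addr, !ip_scall, !ip_scalr, !ip_subl, !ip_subr.
  rewrite (hinner_sym H c z), (hinner_sym H w z), (hinner_sym H c z'), (hinner_sym H w z'),
    (hinner_sym H w c).
  field. exact Ha.
Qed.

Section SVP.
Variable H : HilbertSpace.
Variable Om : H -> Prop.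
Variable f : H -> R.
Hypothesis Omcl : seqclosed Om.
Hypothesis Omne : exists z, Om z.
Hypothesis fbd : exists m, forall z, Om z -> m <= f z.
Hypothesis fcont : forall s l, (forall n, Om (s n)) -> Om l -> conv s l -> Un_cv (fun n => f (s n)) (f l).
Variable sig rho : R.
Hypothesis sig_pos : sig > 0.
Hypothesis rho_pos : 0 < rho.

Local Notation nsq x := (hinner H x x).

Lemma near_min c a d : exists z, (0 <= a -> d > 0 -> Om z /\
   forall z', Om z' -> f z + a * nsq (hsub z c) <= f z' + a * nsq (hsub z' c) + d).
Proof.
  destruct (classic (0 <= a /\ d > 0)) as [[Ha Hd]|Hn].
  2:{ destruct Omne as [z0 _]. exists z0. intros; tauto. }
  destruct fbd as [m Hm].
  set (E := fun y => exists z, Om z /\ y = - (f z + a * nsq (hsub z c))).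
  assert (Hb : bound E).
  { exists (- m). intros y [z [Hz ->]]. specialize (Hm z Hz).
    assert (0 <= nsq (hsub z c)) by apply nsq_nonneg. nra. }
  assert (Hex : exists x, E x).
  { destruct Omne as [z0 Hz0]. exists (- (f z0 + a * nsq (hsub z0 c))). exists z0; auto. }
  destruct (completeness E Hb Hex) as [L [HL1 HL2]].
  destruct (classic (exists z, Om z /\ - (f z + a * nsq (hsub z c)) > L - d)) as [[z [Hz Hgt]]|Hno].
  + exists z. intros _ _. split; auto. intros z' Hz'.
      assert (- (f z' + a * nsq (hsub z' c)) <= L) by (apply HL1; exists z'; auto). lra.
  + exfalso. assert (L <= L - d); [|lra].
      apply HL2. intros y [z [Hz ->]]. apply Rnot_lt_le. intro Hlt. apply Hno. exists z. split; auto; lra.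
Qed.

Definition pick c a d := proj1_sig (constructive_indefinite_description _ (near_min c a d)).
Lemma pick_spec c a d : 0 <= a -> d > 0 -> Om (pick c a d) /\
   forall z', Om z' -> f (pick c a d) + a * nsq (hsub (pick c a d) c) <= f z' + a * nsq (hsub z' c) + d.
Proof. unfold pick. destruct (constructive_indefinite_description _ _). simpl. auto. Qed.

Definition dl k := sig * rho^2 * (/8)^k.
Definition mu k := sig * (/2)^(S k).
Definition ak k := sig * (1 - (/2)^k).
Definition th k := mu k / ak (S k).

Fixpoint st (k : nat) : H * H := match k with
 | O => (hzero H, pick (hzero H) (ak 0) (dl 0))
 | S k' => let c' := hadd H (fst (st k')) (hscal H (th k') (hsub (snd (st k')) (fst (st k')))) in
           (c', pick c' (ak (S k')) (dl (S k'))) end.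

Definition cc k := fst (st k).
Definition zz k := snd (st k).

Lemma hp_pos k : 0 < (/2)^k. Proof. apply pow_lt; lra. Qed.
Lemma hp_le1 k : (/2)^k <= 1. Proof. apply pow_le1; lra. Qed.
Lemma ak_nonneg k : 0 <= ak k. Proof. unfold ak. assert (K := hp_le1 k). nra. Qed.
Lemma dl_pos k : dl k > 0.
Proof. unfold dl. apply Rmult_lt_0_compat; [apply Rmult_lt_0_compat; [lra|apply pow_lt; lra]|apply pow_lt; lra]. Qed.
Lemma ak_S k : ak (S k) = ak k + mu k.
Proof. unfold ak, mu. simpl. field. Qed.
Lemma akS_ge k : ak (S k) >= sig / 2.
Proof. unfold ak. simpl. assert (K := hp_le1 k). nra. Qed.
Lemma mu_pos k : mu k > 0.
Proof. unfold mu. apply Rmult_lt_0_compat; [lra|apply pow_lt; lra]. Qed.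
Lemma th_range k : 0 <= th k <= 1.
Proof.
  unfold th. rewrite ak_S. assert (A := ak_nonneg k); assert (B := mu_pos k).
  split; [apply Rlt_le, Rdiv_lt_0_compat; lra|].
  apply Rmult_le_reg_r with (ak k + mu k); [lra|]. unfold Rdiv. rewrite Rmult_assoc, Rinv_l; lra.
Qed.
Lemma th_le k : th k <= (/2)^k.
Proof.
  unfold th. assert (A := akS_ge k). assert (B := mu_pos k).
  apply Rmult_le_reg_r with (ak (S k)); [lra|]. unfold Rdiv. rewrite Rmult_assoc, Rinv_l by lra.
  unfold mu. simpl. assert (K := hp_pos k). nra.
Qed.
Lemma th0 : th 0 = 1.
Proof. unfold th, mu, ak. simpl. field. lra. Qed.

Lemma cc_S k : cc (S k) = hadd H (cc k) (hscal H (th k) (hsub (zz k) (cc k))).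
Proof. reflexivity. Qed.

Lemma zz_spec k : Om (zz k) /\ forall z', Om z' ->
   f (zz k) + ak k * nsq (hsub (zz k) (cc k)) <= f z' + ak k * nsq (hsub z' (cc k)) + dl k.
Proof.
  destruct k as [|k]; unfold zz, cc; simpl; apply pick_spec; try apply ak_nonneg; apply dl_pos.
Qed.

Lemma step_bound k : mu k * nsq (hsub (zz (S k)) (zz k)) <= dl k + dl (S k).
Proof.
  destruct (zz_spec k) as [Hk Sk]. destruct (zz_spec (S k)) as [HSk SSk].
  assert (A := SSk (zz k) Hk). assert (B := Sk (zz (S k)) HSk).
  rewrite cc_S in A. unfold th in A. rewrite ak_S in A.
  assert (Hne : ak k + mu k <> 0) by (assert (K := ak_nonneg k); assert (K2 := mu_pos k); lra).
  assert (R := recenter H (ak k) (mu k) (cc k) (zz k) (zz (S k)) (zz k) Hne).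
  rewrite !ip_subl, !ip_subr in R. rewrite !ip_subl, !ip_subr in A, B. rewrite !ip_subl, !ip_subr.
  rewrite (hinner_sym H (zz k) (zz (S k))) in *. nra.
Qed.

Definition C0 := 2 * rho.

Lemma step_nrm k : nrm (hsub (zz (S k)) (zz k)) <= C0 * (/2)^k.
Proof.
  assert (A := step_bound k). unfold nrm. apply sqrt_le_sq.
  - unfold C0. assert (K := hp_pos k). nra.
  - assert (M := mu_pos k). assert (P := nsq_nonneg H (hsub (zz (S k)) (zz k))).
    unfold dl, mu, C0 in *. simpl in *.
    assert (E8 : (/8)^k = (/2)^k * (/2)^k * (/2)^k).
    { rewrite <- !Rpow_mult_distr. f_equal. field. }
    rewrite E8 in A. assert (K := hp_pos k). set (q := (/2)^k) in *.
    assert (Hq : nsq (hsub (zz (S k)) (zz k)) * (sig * (/2 * q)) <= sig * rho^2 * (q*q*q) * (1 + /8)) by lra.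
    assert (Hq2 : nsq (hsub (zz (S k)) (zz k)) <= rho^2 * (q * q) * (9/4)).
    { apply Rmult_le_reg_r with (sig * (/2 * q)); [nra|]. nra. }
    nra.
Qed.

Lemma zz_conv : exists zi, conv zz zi /\ forall k, nrm (hsub (zz k) zi) <= 2 * C0 * (/2)^k.
Proof. apply geom_cauchy; [unfold C0; lra|]. intro k. apply step_nrm. Qed.


Lemma conv_le_bound (s : nat -> H) l a B : conv s l -> (forall n, nrm (hsub (s n) a) <= B) ->
  nrm (hsub l a) <= B.
Proof.
  intros Hc Hb. apply Rnot_lt_le. intro Hlt.
  destruct (Hc (nrm (hsub l a) - B)) as [N HN]; [lra|].
  specialize (HN N (le_n _)). specialize (Hb N).
  assert (T := tri_sub H l (s N) a). rewrite nrm_sub_sym in HN. lra.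
Qed.

Definition Bz := 4 * C0.

Lemma zz_near0 zi : (forall k, nrm (hsub (zz k) zi) <= 2 * C0 * (/2)^k) ->
   forall k, nrm (hsub (zz k) (zz 0)) <= Bz.
Proof.
  intros Hz k. eapply Rle_trans; [apply (tri_sub H _ zi)|].
  rewrite (nrm_sub_sym H zi). assert (A := Hz k). assert (B := Hz 0%nat).
  assert (K := hp_le1 k). assert (0 <= C0) by (unfold C0; lra). simpl in B. unfold Bz. nra.
Qed.

Lemma cc_step k : nrm (hsub (cc (S k)) (zz 0)) <=
   (1 - th k) * nrm (hsub (cc k) (zz 0)) + th k * nrm (hsub (zz k) (zz 0)).
Proof.
  replace (hsub (cc (S k)) (zz 0)) with
    (hadd H (hscal H (1 - th k) (hsub (cc k) (zz 0))) (hscal H (th k) (hsub (zz k) (zz 0)))).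
  - eapply Rle_trans; [apply tri|]. rewrite !nrm_scal. assert (T := th_range k).
    rewrite !Rabs_right by lra. lra.
  - apply ip_ext; intro w. rewrite cc_S. rewrite !ip_addl, !ip_scall, !ip_subl, !ip_addl, !ip_scall, !ip_subl. ring.
Qed.

Lemma cc_near zi : (forall k, nrm (hsub (zz k) zi) <= 2 * C0 * (/2)^k) ->
   forall k, nrm (hsub (cc (S k)) (zz 0)) <= Bz.
Proof.
  intros Hz k. assert (Zn := zz_near0 zi Hz). induction k.
  - eapply Rle_trans; [apply cc_step|]. rewrite th0, nrm_self_sub. unfold Bz, C0. lra.
  - eapply Rle_trans; [apply cc_step|]. assert (T := th_range (S k)). specialize (Zn (S k)). nra.
Qed.

Lemma cc_conv zi : (forall k, nrm (hsub (zz k) zi) <= 2 * C0 * (/2)^k) ->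
  exists ci, conv (fun k => cc (S k)) ci /\ forall k, nrm (hsub (cc (S k)) ci) <= 2 * (2 * Bz) * (/2)^k.
Proof.
  intros Hz. apply geom_cauchy; [unfold Bz, C0; lra|]. intro k.
  replace (hsub (cc (S (S k))) (cc (S k))) with (hscal H (th (S k)) (hsub (zz (S k)) (cc (S k)))).
  - rewrite nrm_scal. assert (T := th_range (S k)). rewrite Rabs_right by lra.
    assert (A : nrm (hsub (zz (S k)) (cc (S k))) <= 2 * Bz).
    { eapply Rle_trans; [apply (tri_sub H _ (zz 0))|]. rewrite (nrm_sub_sym H (zz 0)).
      assert (B1 := zz_near0 zi Hz (S k)). assert (B2 := cc_near zi Hz k). lra. }
    assert (T2 := th_le (S k)). simpl in T2. assert (K := hp_pos k).
    assert (0 <= nrm (hsub (zz (S k)) (cc (S k)))) by apply nrm_nonneg. nra.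
  - apply ip_ext; intro w. rewrite (cc_S (S k)). rewrite !ip_subl, !ip_addl, !ip_scall, !ip_subl. ring.
Qed.

Lemma SVP_core : exists zb c, Om zb /\
  (forall z, Om z -> f zb + sig * nsq (hsub zb c) <= f z + sig * nsq (hsub z c)) /\
  nrm (hsub zb c) <= 2 * Bz /\ (forall z, Om z -> f zb <= f z + dl 0 + sig * (Bz * Bz)).
Proof.
  destruct zz_conv as [zi [Hzc Hzb]].
  destruct (cc_conv zi Hzb) as [ci [Hcc Hcb]].
  assert (Hzi : Om zi) by (apply (Omcl zz); auto; intro n; apply zz_spec).
  assert (Hci : nrm (hsub ci (zz 0)) <= Bz).
  { apply (conv_le_bound (fun k => cc (S k))); auto. apply cc_near with zi; auto. }
  assert (Hzi0 : nrm (hsub zi (zz 0)) <= Bz).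
  { apply (conv_le_bound zz); auto. apply zz_near0 with zi; auto. }
  assert (Hmain : forall z, Om z -> f zi + sig * nsq (hsub zi ci) <= f z + sig * nsq (hsub z ci)).
  { intros z Hz.
    assert (Ha : Un_cv (fun k => ak (S k)) sig).
    { unfold ak. apply cv_eq with (sig * (1 - 0)); [|ring].
      apply CV_mult; [apply cv_const|]. apply CV_minus; [apply cv_const|].
      apply cv_shift, pow_cv0; lra. }
    assert (Hd : Un_cv (fun k => dl (S k)) 0).
    { unfold dl. apply cv_eq with (sig * rho^2 * 0); [|ring]. apply CV_mult; [apply cv_const|].
      apply cv_shift, pow_cv0; lra. }
    apply Rle_cv_lim with (Un := fun k => f (zz (S k)) + ak (S k) * nsq (hsub (zz (S k)) (cc (S k))))
                      (Vn := fun k => f z + ak (S k) * nsq (hsub z (cc (S k))) + dl (S k)).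
    - intro k. destruct (zz_spec (S k)) as [_ Hs]. apply Hs; auto.
    - apply CV_plus.
      + apply (fcont (fun k => zz (S k))); auto; [intro n; apply zz_spec|]. apply conv_shift; auto.
      + apply CV_mult; auto. apply conv_nsq. apply conv_sub; auto. apply conv_shift; auto.
    - apply cv_eq with (f z + sig * nsq (hsub z ci) + 0); [|ring].
      apply CV_plus; auto. apply CV_plus; [apply cv_const|]. apply CV_mult; auto.
      apply conv_nsq. apply conv_sub; auto. apply conv_const. }
  exists zi, ci. split; [auto|]. split; [auto|]. split.
  - eapply Rle_trans; [apply (tri_sub H _ (zz 0))|]. rewrite (nrm_sub_sym H (zz 0)). lra.
  - intros z Hz. destruct (zz_spec 0) as [H0 H0s].
    assert (A := Hmain (zz 0) H0). assert (A0 := H0s z Hz). unfold ak in A0. simpl in A0.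
    assert (B : nsq (hsub (zz 0) ci) <= Bz * Bz).
    { rewrite <- nrm_sq. rewrite nrm_sub_sym. assert (0 <= nrm (hsub ci (zz 0))) by apply nrm_nonneg. nra. }
    assert (0 <= nsq (hsub zi ci)) by apply nsq_nonneg. nra.
Qed.

End SVP.

Theorem SVP (H : HilbertSpace) (Om : H -> Prop) (f : H -> R) :
  seqclosed Om -> (exists z, Om z) -> (exists m, forall z, Om z -> m <= f z) ->
  (forall s l, (forall n, Om (s n)) -> Om l -> conv s l -> Un_cv (fun n => f (s n)) (f l)) ->
  forall sig eta, sig > 0 -> eta > 0 ->
  exists zb c, Om zb /\
  (forall z, Om z -> f zb + sig * hinner H (hsub zb c) (hsub zb c) <= f z + sig * hinner H (hsub z c) (hsub z c)) /\
  hinner H (hsub zb c) (hsub zb c) <= 1 /\ (forall z, Om z -> f zb <= f z + eta).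
Proof.
  intros Hcl Hne Hbd Hct sig eta Hs He.
  set (rho := Rmin (1/16) (eta / (65 * (sig + 1)))).
  assert (Hr1 : rho <= 1/16) by apply Rmin_l.
  assert (Hr2 : rho <= eta / (65 * (sig+1))) by apply Rmin_r.
  assert (Hr0 : 0 < rho) by (apply Rmin_pos; [lra|apply Rdiv_lt_0_compat; lra]).
  destruct (SVP_core H Om f Hcl Hne Hbd Hct sig rho Hs Hr0) as [zb [c [Hz [Hm [Hn Hf]]]]].
  exists zb, c. split; [auto|]. split; [auto|]. unfold Bz, C0 in *. split.
  - rewrite <- nrm_sq. assert (0 <= nrm (hsub zb c)) by apply nrm_nonneg. nra.
  - intros z Hz'. specialize (Hf z Hz'). unfold dl in Hf. simpl in Hf.
    assert (rho * rho <= rho) by nra.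
    assert (65 * sig * rho <= eta * (sig / (sig + 1))).
    { apply Rmult_le_compat_l with (r := 65 * sig) in Hr2; [|lra].
      replace (65 * sig * (eta / (65 * (sig + 1)))) with (eta * (sig / (sig+1))) in Hr2 by (field; lra). lra. }
    assert (sig / (sig + 1) <= 1).
    { apply Rmult_le_reg_r with (sig + 1); [lra|]. unfold Rdiv. rewrite Rmult_assoc, Rinv_l; lra. }
    nra.
Qed.


Lemma small_t K Q : 0 <= Q -> (forall t, 0 < t <= 1 -> 0 <= K + t * Q) -> 0 <= K.
Proof.
  intros HQ Ht. apply Rnot_lt_le; intro HK.
  set (t := Rmin 1 (- K / (2 * (Q + 1)))).
  assert (t1 : t <= 1) by apply Rmin_l.
  assert (t2 : t <= - K / (2 * (Q+1))) by apply Rmin_r.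
  assert (t0 : 0 < t) by (apply Rmin_pos; [lra|apply Rdiv_lt_0_compat; lra]).
  specialize (Ht t (conj t0 t1)).
  assert (t * (2 * (Q+1)) <= - K).
  { apply Rmult_le_compat_r with (r := 2*(Q+1)) in t2; [|lra].
    replace (- K / (2 * (Q + 1)) * (2 * (Q + 1))) with (-K) in t2 by (field; lra). lra. }
  nra.
Qed.

Section Minty.
Variable X : HilbertSpace.
Variable T : X -> X -> Prop.
Hypothesis Tmax : maximal_monotone T.
Hypothesis Tprop : proper T.

Local Notation ip := (hinner X).

Lemma related_in x y : (forall a b, T a b -> 0 <= ip (hsub y b) (hsub x a)) -> T x y.
Proof.
  intros Hr. destruct Tmax as [Hm Hmax].
  set (S := fun u v => T u v \/ (u = x /\ v = y)).
  assert (HS : monotone S).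
  { intros u1 v1 u2 v2 [H1|[-> ->]] [H2|[-> ->]].
    - apply Hm; auto.
    - specialize (Hr u1 v1 H1). rewrite !ip_subl, !ip_subr in Hr. rewrite !ip_subl, !ip_subr.
      rewrite (hinner_sym X y x), (hinner_sym X y u1), (hinner_sym X v1 x) in *. lra.
    - apply Hr; auto.
    - rewrite ip_subl, !ip_subr. lra. }
  apply (Hmax S HS (fun u v H => or_introl H)). right; auto.
Qed.

Definition Fle x y c := forall a b, T a b -> ip x b + ip a y - ip a b <= c.
Definition gq (x y : X) := (ip x x + ip y y) / 2.

Lemma Fle_ge x y c : Fle x y c -> ip x y <= c.
Proof.
  intro HF. apply Rnot_lt_le. intro Hlt.
  assert (HT : T x y).
  { apply related_in. intros a b Hab. specialize (HF a b Hab).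
    rewrite !ip_subl, !ip_subr. rewrite (hinner_sym X y x), (hinner_sym X y a), (hinner_sym X b x), (hinner_sym X b a). lra. }
  specialize (HF x y HT). lra.
Qed.

Lemma Fle_graph a b : T a b -> Fle a b (ip a b).
Proof.
  intros Hab a' b' H'. destruct Tmax as [Hm _]. specialize (Hm a b a' b' Hab H').
  rewrite !ip_subl, !ip_subr in Hm.
  rewrite (hinner_sym X b a), (hinner_sym X b a'), (hinner_sym X b' a), (hinner_sym X b' a') in Hm. lra.
Qed.

Lemma Fle_mix x y c x' y' c' t : 0 <= t <= 1 -> Fle x y c -> Fle x' y' c' ->
  Fle (hadd X x (hscal X t (hsub x' x))) (hadd X y (hscal X t (hsub y' y))) (c + t * (c' - c)).
Proof.
  intros Ht H1 H2 a b Hab. specialize (H1 a b Hab). specialize (H2 a b Hab).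
  rewrite !ip_addl, !ip_addr, !ip_scall, !ip_scalr, !ip_subl, !ip_subr.
  assert (0 <= (1 - t) * (c - (ip x b + ip a y - ip a b))) by (apply Rmult_le_pos; lra).
  assert (0 <= t * (c' - (ip x' b + ip a y' - ip a b))) by (apply Rmult_le_pos; lra). nra.
Qed.

Lemma g_bound x y c : Fle x y c -> 0 <= c + gq x y.
Proof.
  intro HF. assert (A := Fle_ge x y c HF). unfold gq.
  assert (B := nsq_nonneg X (hadd X x y)). rewrite !ip_addl, !ip_addr in B.
  rewrite (hinner_sym X y x) in B. lra.
Qed.

Definition Eset r := exists x y c, Fle x y c /\ r = - (c + gq x y).

Lemma Eset_lub : { L | is_lub Eset L }.
Proof.
  apply completeness.
  - exists 0. intros r [x [y [c [HF ->]]]]. assert (K := g_bound x y c HF). lra.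
  - destruct Tprop as [a [b Hab]]. exists (- (ip a b + gq a b)). exists a, b, (ip a b). split; auto.
    apply Fle_graph; auto.
Qed.

Definition mm := - proj1_sig Eset_lub.

Lemma mm_low x y c : Fle x y c -> mm <= c + gq x y.
Proof.
  intro HF. unfold mm. destruct Eset_lub as [L [H1 H2]]. simpl.
  assert (- (c + gq x y) <= L) by (apply H1; exists x, y, c; auto). lra.
Qed.

Lemma mm_approx d : d > 0 -> exists x y c, Fle x y c /\ c + gq x y <= mm + d.
Proof.
  intro Hd. unfold mm. destruct Eset_lub as [L [H1 H2]]. simpl.
  apply NNPP. intro Hno.
  assert (L <= L - d); [|lra]. apply H2. intros r [x [y [c [HF ->]]]].
  apply Rnot_lt_le. intro Hlt. apply Hno. exists x, y, c. split; auto. lra.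
Qed.

Definition ddm k := (/2)^k * (/2)^k.

Lemma seq_exists : forall k : nat, exists p : X * X * R,
   Fle (fst (fst p)) (snd (fst p)) (snd p) /\ snd p + gq (fst (fst p)) (snd (fst p)) <= mm + ddm k.
Proof.
  intro k. destruct (mm_approx (ddm k)) as [x [y [c [H1 H2]]]].
  { unfold ddm. assert (0 < (/2)^k) by (apply pow_lt; lra). nra. }
  exists (x, y, c). simpl. auto.
Qed.

Definition sq k := proj1_sig (constructive_indefinite_description _ (seq_exists k)).
Definition sx k := fst (fst (sq k)).
Definition sy k := snd (fst (sq k)).
Definition sc k := snd (sq k).
Lemma sq_spec k : Fle (sx k) (sy k) (sc k) /\ sc k + gq (sx k) (sy k) <= mm + ddm k.
Proof. unfold sx, sy, sc, sq. destruct (constructive_indefinite_description _ _). simpl. auto. Qed.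

Lemma mid_bound k j : ip (hsub (sx k) (sx j)) (hsub (sx k) (sx j)) + ip (hsub (sy k) (sy j)) (hsub (sy k) (sy j))
   <= 4 * (ddm k + ddm j).
Proof.
  destruct (sq_spec k) as [Fk Vk]. destruct (sq_spec j) as [Fj Vj].
  assert (M := mm_low _ _ _ (Fle_mix _ _ _ _ _ _ (/2) ltac:(lra) Fk Fj)).
  assert (Lk := mm_low _ _ _ Fk). assert (Lj := mm_low _ _ _ Fj).
  unfold gq in *.
  rewrite !ip_addl, !ip_addr, !ip_scall, !ip_scalr, !ip_subl, !ip_subr in M.
  rewrite !ip_subl, !ip_subr.
  rewrite (hinner_sym X (sx j) (sx k)), (hinner_sym X (sy j) (sy k)) in *.
  lra.
Qed.

Lemma step_x k : nrm (hsub (sx (S k)) (sx k)) <= 3 * (/2)^k.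
Proof.
  assert (A := mid_bound (S k) k). unfold nrm. apply sqrt_le_sq.
  - assert (0 < (/2)^k) by (apply pow_lt; lra). lra.
  - assert (B := nsq_nonneg X (hsub (sy (S k)) (sy k))). unfold ddm in A. simpl in A.
    assert (0 < (/2)^k) by (apply pow_lt; lra). nra.
Qed.
Lemma step_y k : nrm (hsub (sy (S k)) (sy k)) <= 3 * (/2)^k.
Proof.
  assert (A := mid_bound (S k) k). unfold nrm. apply sqrt_le_sq.
  - assert (0 < (/2)^k) by (apply pow_lt; lra). lra.
  - assert (B := nsq_nonneg X (hsub (sx (S k)) (sx k))). unfold ddm in A. simpl in A.
    assert (0 < (/2)^k) by (apply pow_lt; lra). nra.
Qed.

Lemma minty0 : exists x, T x (hopp X x).
Proof.
  destruct (geom_cauchy X sx 3) as [x0 [Hx0 _]]; [lra|apply step_x|].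
  destruct (geom_cauchy X sy 3) as [y0 [Hy0 _]]; [lra|apply step_y|].
  set (c0 := mm - gq x0 y0).
  assert (Hdd : Un_cv ddm 0).
  { unfold ddm. apply cv_eq with (0 * 0); [|ring]. apply CV_mult; apply pow_cv0; lra. }
  assert (HF0 : Fle x0 y0 c0).
  { intros a b Hab. unfold c0.
    apply Rle_cv_lim with (Un := fun k => ip (sx k) b + ip a (sy k) - ip a b)
                          (Vn := fun k => mm + ddm k - gq (sx k) (sy k)).
    - intro k. destruct (sq_spec k) as [F V]. specialize (F a b Hab). lra.
    - apply CV_minus; [|apply cv_const]. apply CV_plus; [apply conv_ip_const; auto|].
      assert (K := conv_ip_const X sy y0 a Hy0).
      intros e He. destruct (K e He) as [N HN]. exists N. intros n Hn.
      rewrite !(hinner_sym X a). apply HN; auto.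
    - apply cv_eq with (mm + 0 - gq x0 y0); [|ring]. apply CV_minus; [apply CV_plus; [apply cv_const|auto]|].
      unfold gq. apply cv_eq with ((ip x0 x0 + ip y0 y0) * /2); [|unfold Rdiv; ring].
      apply CV_mult; [|apply cv_const]. apply CV_plus; apply conv_nsq; auto. }
  assert (Hc0 := Fle_ge _ _ _ HF0).
  assert (Key : forall a b, T a b ->
     0 <= ip a b - c0 + ip x0 a - ip x0 x0 + ip y0 b - ip y0 y0).
  { intros a b Hab.
    assert (Hab' := Fle_graph a b Hab).
    apply (small_t _ ((ip (hsub a x0) (hsub a x0) + ip (hsub b y0) (hsub b y0)) / 2)).
    - assert (A1 := nsq_nonneg X (hsub a x0)); assert (A2 := nsq_nonneg X (hsub b y0)); lra.
    - intros t Ht. assert (M := mm_low _ _ _ (Fle_mix _ _ _ _ _ _ t ltac:(lra) HF0 Hab')).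
      unfold c0, gq in M. rewrite !ip_addl, !ip_addr, !ip_scall, !ip_scalr, !ip_subl, !ip_subr in M.
      rewrite !ip_subl, !ip_subr.
      rewrite (hinner_sym X a x0), (hinner_sym X b y0) in *.
      assert (Ht0 : t > 0) by lra.
      apply Rmult_le_reg_l with t; [lra|]. unfold c0, gq. lra. }
  assert (Hrel : T (hopp X y0) (hopp X x0)).
  { apply related_in. intros a b Hab. specialize (Key a b Hab).
    rewrite !ip_subl, !ip_subr, !ip_oppl, !ip_oppr.
    rewrite (hinner_sym X b y0), (hinner_sym X b a).
    assert (B := nsq_nonneg X (hadd X x0 y0)). rewrite !ip_addl, !ip_addr, (hinner_sym X y0 x0) in B.
    lra. }
  specialize (Key _ _ Hrel). rewrite !ip_oppl, !ip_oppr in Key.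
  assert (E : hinner X (hadd X x0 y0) (hadd X x0 y0) = 0).
  { apply Rle_antisym; [|apply nsq_nonneg]. rewrite !ip_addl, !ip_addr.
    rewrite (hinner_sym X y0 x0) in *. nra. }
  apply hinner_def in E.
  exists (hopp X y0).
  replace (hopp X (hopp X y0)) with (hopp X x0); auto.
  apply ip_ext; intro w. rewrite !ip_oppl.
  assert (E2 := f_equal (fun v => hinner X v w) E). simpl in E2. rewrite ip_addl, ip_0l in E2. lra.
Qed.

End Minty.

Lemma shift_max (X : HilbertSpace) (T : X -> X -> Prop) w :
  maximal_monotone T -> maximal_monotone (fun a b => T a (hadd X b w)).
Proof.
  intros [Hm Hmax]. split.
  - intros u1 v1 u2 v2 H1 H2. specialize (Hm _ _ _ _ H1 H2).
    replace (hinner X (hsub v1 v2) (hsub u1 u2)) with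
            (hinner X (hsub (hadd X v1 w) (hadd X v2 w)) (hsub u1 u2)); auto.
    rewrite !ip_subl, !ip_addl. ring.
  - intros S' HS' Hsub.
    assert (Ew : forall v, hadd X (hsub v w) w = v).
    { intro v. apply ip_ext; intro q. rewrite ip_addl, ip_subl. ring. }
    assert (Ew2 : forall v, hsub (hadd X v w) w = v).
    { intro v. apply ip_ext; intro q. rewrite ip_subl, ip_addl. ring. }
    set (S := fun u v => S' u (hsub v w)).
    assert (HS : monotone S).
    { intros u1 v1 u2 v2 H1 H2. specialize (HS' _ _ _ _ H1 H2).
      replace (hinner X (hsub v1 v2) (hsub u1 u2)) with
              (hinner X (hsub (hsub v1 w) (hsub v2 w)) (hsub u1 u2)); auto.
      rewrite !ip_subl. ring. }
    assert (HTS : forall u v, T u v -> S u v).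
    { intros u v Huv. unfold S. apply Hsub. rewrite Ew. auto. }
    intros u v. specialize (Hmax S HS HTS u (hadd X v w)). unfold S in Hmax. rewrite Ew2 in Hmax. exact Hmax.
Qed.

Lemma minty (X : HilbertSpace) (T : X -> X -> Prop) :
  maximal_monotone T -> proper T -> forall w, exists a b, T a b /\ hadd X a b = w.
Proof.
  intros Hmax Hp w.
  assert (Hp' : proper (fun a b => T a (hadd X b w))).
  { destruct Hp as [a [b Hab]]. exists a, (hsub b w).
    replace (hadd X (hsub b w) w) with b; auto. apply ip_ext; intro q. rewrite ip_addl, ip_subl. ring. }
  destruct (minty0 X _ (shift_max X T w Hmax) Hp') as [x Hx].
  exists x, (hadd X (hopp X x) w). split; auto.
  apply ip_ext; intro q. rewrite !ip_addl, ip_oppl. ring.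
Qed.


Lemma dir1 (X : HilbertSpace) (T : X -> X -> Prop) : proper T -> maximal_monotone T ->
  hypomonotone T /\ forall u v, T u v -> forall w z, reg_coderiv T u v w z -> 0 <= hinner X z w.
Proof.
  intros Hp Hmax. assert (Hm := proj1 Hmax). split.
  - exists 1. split; [lra|]. intros u1 v1 u2 v2 H1 H2. specialize (Hm _ _ _ _ H1 H2).
    assert (0 <= (hnorm (hsub u1 u2))^2) by (simpl; rewrite Rmult_1_r; apply Rle_0_sqr). lra.
  - intros u v Huv w z Hreg. apply Rnot_lt_le; intro Hneg.
    remember (- hinner X z w) as kap eqn:Ek. assert (Hk : kap > 0) by lra.
    set (d := hsub z w).
    assert (Hnd := nrm_nonneg X d).
    destruct (Hreg (kap / (nrm d + 1))) as [del [Hdel Hd]].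
    { apply Rdiv_lt_0_compat; lra. }
    set (t := del / (2 * (nrm d + 1))).
    assert (Ht : t > 0) by (apply Rdiv_lt_0_compat; lra).
    destruct (minty X T Hmax Hp (hadd X (hadd X u v) (hscal X t d))) as [a [b [Hab Es]]].
    set (A := hsub a u). set (B := hsub b v).
    assert (sumAB : forall q, hinner X A q + hinner X B q = t * (hinner X z q - hinner X w q)).
    { intro q. assert (E := f_equal (fun y => hinner X y q) Es). simpl in E.
      unfold A, B, d in *. rewrite !ip_addl, !ip_scall, !ip_subl in E. rewrite !ip_subl. lra. }
    assert (mono : 0 <= hinner X B A) by (apply Hm; auto).
    assert (qA := sumAB A). assert (qB := sumAB B). assert (qw := sumAB w). assert (qz := sumAB z).
    assert (K := nsq_nonneg X (hadd X A (hscal X t w))). rewrite ip_expand in K.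
    set (P := hinner X z A - hinner X w B).
    assert (Hsq : hinner X A A + hinner X B B <= t * t * hinner X d d).
    { unfold d. rewrite !ip_subl, !ip_subr.
      try rewrite (hinner_sym X B A) in *; try rewrite (hinner_sym X z A) in *;
      try rewrite (hinner_sym X w A) in *; try rewrite (hinner_sym X z B) in *;
      try rewrite (hinner_sym X w B) in *; try rewrite (hinner_sym X w z) in *.
      nra. }
    assert (HP : P >= t * kap).
    { unfold P.
      try rewrite (hinner_sym X B A) in *; try rewrite (hinner_sym X z A) in *;
      try rewrite (hinner_sym X w A) in *; try rewrite (hinner_sym X z B) in *;
      try rewrite (hinner_sym X w B) in *; try rewrite (hinner_sym X w z) in *.
      assert (t * (hinner X A z + t * hinner X w w + hinner X A w) >= 0) by nra.
      assert (hinner X A z + t * hinner X w w + hinner X A w >= 0).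
      { apply Rnot_lt_ge; intro Hl. assert (t * (hinner X A z + t * hinner X w w + hinner X A w) < 0) by (apply Rmult_pos_neg; lra). lra. }
      nra. }
    set (pn := pnorm (psub (a, b) (u, v))).
    assert (Epn : pn = sqrt (hinner X A A + hinner X B B)) by reflexivity.
    assert (Hpn : pn <= t * nrm d).
    { rewrite Epn. apply sqrt_le_sq; [nra|]. rewrite <- (nrm_sq X d) in Hsq. nra. }
    assert (Hpos : 0 < pn).
    { destruct (Rle_lt_or_eq_dec 0 pn) as [L|E]; [rewrite Epn; apply sqrt_pos|auto|].
      exfalso. rewrite Epn in E. symmetry in E. apply sqrt_eq_0 in E; [|assert (K1 := nsq_nonneg X A); assert (K2 := nsq_nonneg X B); lra].
      assert (K1 := nsq_nonneg X A); assert (K2 := nsq_nonneg X B).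
      assert (EA : A = hzero X) by (apply hinner_def; lra).
      assert (EB : B = hzero X) by (apply hinner_def; lra).
      assert (P = 0) by (unfold P; rewrite EA, EB, !ip_0r; ring).
      nra. }
    assert (Hlt : pn < del).
    { eapply Rle_lt_trans; [exact Hpn|]. unfold t.
      replace (del / (2 * (nrm d + 1)) * nrm d) with (del * (nrm d / (2 * (nrm d + 1)))) by (field; lra).
      assert (nrm d / (2 * (nrm d + 1)) < 1).
      { apply Rmult_lt_reg_r with (2 * (nrm d + 1)); [lra|]. unfold Rdiv. rewrite Rmult_assoc, Rinv_l; lra. }
      nra. }
    specialize (Hd (a, b) Hab (conj Hpos Hlt)).
    fold pn in Hd.
    assert (EP : pinner (z, hopp X w) (psub (a, b) (u, v)) = P).
    { unfold pinner, P. simpl. rewrite ip_oppl. fold A B. ring. }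
    rewrite EP in Hd.
    assert (P <= kap / (nrm d + 1) * pn).
    { apply Rmult_le_reg_r with (/ pn); [apply Rinv_0_lt_compat; lra|].
      rewrite Rmult_assoc, Rinv_r by lra. rewrite Rmult_1_r. exact Hd. }
    assert (kap / (nrm d + 1) * pn <= kap / (nrm d + 1) * (t * nrm d)).
    { apply Rmult_le_compat_l; [apply Rlt_le, Rdiv_lt_0_compat; lra|auto]. }
    assert (kap / (nrm d + 1) * (t * nrm d) < t * kap).
    { replace (kap / (nrm d + 1) * (t * nrm d)) with (t * kap * (nrm d / (nrm d + 1))) by (field; lra).
      assert (nrm d / (nrm d + 1) < 1).
      { apply Rmult_lt_reg_r with (nrm d + 1); [lra|]. unfold Rdiv. rewrite Rmult_assoc, Rinv_l; lra. }
      assert (t * kap > 0) by nra. nra. }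
    lra.
Qed.


Lemma nsq_add (H : HilbertSpace) (a h : H) :
  hinner H (hadd H a h) (hadd H a h) = hinner H a a + 2 * hinner H a h + hinner H h h.
Proof. rewrite !ip_addl, !ip_addr, (hinner_sym H h a). ring. Qed.
Lemma nsq_sub (H : HilbertSpace) (a h : H) :
  hinner H (hsub a h) (hsub a h) = hinner H a a - 2 * hinner H a h + hinner H h h.
Proof. rewrite !ip_subl, !ip_subr, (hinner_sym H h a). ring. Qed.

Lemma small_t' K Q h0 : h0 > 0 -> 0 <= Q -> (forall h, 0 < h <= h0 -> 0 <= K + h * Q) -> 0 <= K.
Proof.
  intros Hh0 HQ Ht. apply (small_t K (h0 * Q)).
  - apply Rmult_le_pos; lra.
  - intros t Ht'. specialize (Ht (t * h0)). replace (K + t * (h0 * Q)) with (K + t * h0 * Q) by ring.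
    apply Ht. split; [apply Rmult_lt_0_compat; lra|]. nra.
Qed.

Lemma reg_from_quad (X : HilbertSpace) (Om : X * X -> Prop) pbar q K : K > 0 ->
  (forall p, Om p -> pinner q (psub p pbar) <= K * pinner (psub p pbar) (psub p pbar)) ->
  regular_normal Om pbar q.
Proof.
  intros HK Hq eps He. exists (eps / K). split; [apply Rdiv_lt_0_compat; lra|].
  intros p Hp [H1 H2]. specialize (Hq p Hp).
  assert (E : pinner (psub p pbar) (psub p pbar) = pnorm (psub p pbar) * pnorm (psub p pbar)).
  { unfold pnorm. rewrite sqrt_sqrt; auto. unfold pinner. assert (A := hinner_pos X (fst (psub p pbar)));
    assert (B := hinner_pos X (snd (psub p pbar))); lra. }
  rewrite E in Hq. set (n := pnorm (psub p pbar)) in *.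
  apply Rmult_le_reg_r with n; [lra|]. unfold Rdiv. rewrite Rmult_assoc, Rinv_l by lra.
  rewrite Rmult_1_r. apply Rle_trans with (K * (n * n)); auto.
  assert (K * n < eps).
  { apply Rmult_lt_compat_l with (r := K) in H2; [|lra].
    replace (K * (eps / K)) with eps in H2 by (field; lra). lra. }
  nra.
Qed.

Lemma seqclosed_gph (X : HilbertSpace) (T : X -> X -> Prop) :
  closed_pset (gph T) -> @seqclosed (prodH X X) (gph T).
Proof.
  intros Hcl s l Hs Hc. apply NNPP. intro Hn.
  destruct (Hcl l Hn) as [eps [He Hb]].
  destruct (Hc eps He) as [N HN]. specialize (HN N (le_n _)).
  apply (Hb (s N)); [exact HN|apply Hs].
Qed.

Lemma seqclosed_01 : @seqclosed Rspace (fun t => 0 <= t <= 1).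
Proof.
  intros s l Hs Hc. split.
  - apply Rnot_lt_le. intro Hl. destruct (Hc (- l)) as [N HN]; [lra|].
    specialize (HN N (le_n _)). rewrite R_nrm, R_sub in HN. specialize (Hs N).
    assert (K := Rle_abs (s N - l)). lra.
  - apply Rnot_lt_le. intro Hl. destruct (Hc (l - 1)) as [N HN]; [lra|].
    specialize (HN N (le_n _)). rewrite R_nrm, R_sub in HN. specialize (Hs N).
    assert (K := Rle_abs (- (s N - l))). rewrite Rabs_Ropp in K. lra.
Qed.

Ltac ipl := repeat (first [rewrite ip_subl | rewrite ip_addl | rewrite ip_scall | rewrite ip_oppl | rewrite ip_0l]).

Lemma convR (s : nat -> Rspace) l : conv s l -> Un_cv s l.
Proof.
  intros Hc eps He. destruct (Hc eps He) as [N HN]. exists N. intros n Hn.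
  specialize (HN n Hn). rewrite R_nrm, R_sub in HN. exact HN.
Qed.

Lemma cv_opp' u l : Un_cv u l -> Un_cv (fun n => - u n) (- l).
Proof.
  intros Hc eps He. destruct (Hc eps He) as [N HN]. exists N. intros n Hn.
  specialize (HN n Hn). unfold Rdist in *. replace (- u n - - l) with (- (u n - l)) by ring.
  rewrite Rabs_Ropp. exact HN.
Qed.

Lemma nrm_le1 (H : HilbertSpace) (a : H) : hinner H a a <= 1 -> nrm a <= 1.
Proof. intro Ha. unfold nrm. apply sqrt_le_sq; lra. Qed.

Lemma nrm_scal_pos (H : HilbertSpace) c (a : H) : 0 <= c -> nrm (hscal H c a) = c * nrm a.
Proof. intro Hc. rewrite nrm_scal, Rabs_right; lra. Qed.

Section Mono.
Variable X : HilbertSpace.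
Variable T : X -> X -> Prop.
Hypothesis Tcl : closed_pset (gph T).
Variable r : R.
Hypothesis r_pos : r > 0.
Hypothesis Thyp : forall u1 v1 u2 v2, T u1 v1 -> T u2 v2 ->
  hinner X (hsub v1 v2) (hsub u1 u2) >= - r * (hnorm (hsub u1 u2))^2.
Hypothesis Tcond : forall u v, T u v -> forall w z, reg_coderiv T u v w z -> 0 <= hinner X z w.

Local Notation ip := (hinner X).

Definition lam := / (4 * r).
Lemma lam_pos : lam > 0. Proof. unfold lam. apply Rinv_0_lt_compat. lra. Qed.

Definition xm (p : X * X) := hadd X (fst p) (hscal X lam (snd p)).
Definition ym (p : X * X) := hsub (fst p) (hscal X lam (snd p)).

Lemma xm_diff p q : hsub (xm p) (xm q) = hadd X (hsub (fst p) (fst q)) (hscal X lam (hsub (snd p) (snd q))).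
Proof. apply ip_ext; intro w. unfold xm. rewrite !ip_subl, !ip_addl, !ip_scall, !ip_subl. ring. Qed.
Lemma ym_diff p q : hsub (ym p) (ym q) = hsub (hsub (fst p) (fst q)) (hscal X lam (hsub (snd p) (snd q))).
Proof. apply ip_ext; intro w. unfold ym. rewrite !ip_subl, !ip_scall, !ip_subl. ring. Qed.

Lemma lip p q : T (fst p) (snd p) -> T (fst q) (snd q) ->
  nrm (hsub (ym p) (ym q)) <= 2 * nrm (hsub (xm p) (xm q)).
Proof.
  intros Hp Hq. assert (Hy := Thyp _ _ _ _ Hp Hq).
  unfold hnorm in Hy. simpl in Hy. rewrite Rmult_1_r, sqrt_sqrt in Hy by apply nsq_nonneg.
  rewrite ym_diff, xm_diff. unfold nrm at 1. apply sqrt_le_sq.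
  - assert (K := nrm_nonneg X (hadd X (hsub (fst p) (fst q)) (hscal X lam (hsub (snd p) (snd q))))). lra.
  - replace (2 * nrm (hadd X (hsub (fst p) (fst q)) (hscal X lam (hsub (snd p) (snd q)))) *
            (2 * nrm (hadd X (hsub (fst p) (fst q)) (hscal X lam (hsub (snd p) (snd q))))))
      with (4 * (nrm (hadd X (hsub (fst p) (fst q)) (hscal X lam (hsub (snd p) (snd q)))) *
                 nrm (hadd X (hsub (fst p) (fst q)) (hscal X lam (hsub (snd p) (snd q)))))) by ring.
    rewrite nrm_sq, nsq_add, nsq_sub, !ip_scalr, !ip_scall.
    set (Du := hsub (fst p) (fst q)) in *. set (Dv := hsub (snd p) (snd q)) in *.
    rewrite (hinner_sym X Dv Du) in Hy.
    assert (L := lam_pos). assert (Lr : lam * r = /4) by (unfold lam; field; lra).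
    assert (P1 := nsq_nonneg X Du). assert (P2 := nsq_nonneg X Dv).
    assert (lam * ip Du Dv >= - lam * r * ip Du Du) by nra.
    nra.
Qed.

Section Viol.
Variables u1 v1 u2 v2 : X.
Hypothesis H1 : T u1 v1.
Hypothesis H2 : T u2 v2.
Hypothesis Hneg : ip (hsub v1 v2) (hsub u1 u2) < 0.

Definition P1 := (u1, v1).
Definition P2 := (u2, v2).
Definition x1 := xm P1.
Definition ddv := hsub (xm P2) (xm P1).
Definition Dy := hsub (ym P2) (ym P1).
Definition nd := nrm ddv.
Definition nD := nrm Dy.

Lemma nD_gt : nd < nD.
Proof.
  unfold nd, nD, nrm. apply sqrt_lt_1_alt. split; [apply nsq_nonneg|].
  unfold ddv, Dy. rewrite xm_diff, ym_diff. unfold P1, P2. simpl.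
  assert (E : ip (hsub v1 v2) (hsub u1 u2) = ip (hsub u2 u1) (hsub v2 v1)).
  { rewrite !ip_subl, !ip_subr. rewrite (hinner_sym X v1 u1), (hinner_sym X v1 u2), (hinner_sym X v2 u1),
      (hinner_sym X v2 u2). ring. }
  set (Du := hsub u2 u1) in *. set (Dv := hsub v2 v1) in *.
  rewrite (nsq_add X Du), (nsq_sub X Du), !ip_scalr.
  assert (L := lam_pos). nra.
Qed.

Definition ee := hscal X (/ nD) Dy.
Lemma nD_pos : nD > 0.
Proof. assert (K := nD_gt). assert (0 <= nd) by apply nrm_nonneg. lra. Qed.
Lemma ee_unit : ip ee ee = 1.
Proof.
  unfold ee. rewrite ip_scall, ip_scalr. rewrite <- (nrm_sq X Dy). fold nD. assert (K := nD_pos). field. lra.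
Qed.
Lemma ee_nrm : nrm ee = 1.
Proof. unfold nrm. rewrite ee_unit. apply sqrt_1. Qed.
Lemma ee_Dy : ip Dy ee = nD.
Proof.
  unfold ee. rewrite ip_scalr. rewrite <- (nrm_sq X Dy). fold nD. assert (K := nD_pos). field. lra.
Qed.

Definition rr := (nd + nD) / 2.
Definition gap := (nD - nd) / 2.
Lemma gap_pos : gap > 0. Proof. unfold gap. assert (K := nD_gt). lra. Qed.
Definition kk := 4 / gap.
Lemma kk_pos : kk > 0. Proof. unfold kk. assert (K := gap_pos). apply Rdiv_lt_0_compat; lra. Qed.

Definition Zs := prodH (prodH X X) Rspace.
Definition Wv (z : Zs) : X := hsub (hsub (xm (fst z)) x1) (hscal X (snd z) ddv).
Definition fz (z : Zs) : R := - ip (ym (fst z)) ee + rr * snd z + kk * ip (Wv z) (Wv z).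
Definition Omz (z : Zs) : Prop := T (fst (fst z)) (snd (fst z)) /\ 0 <= snd z <= 1.
Definition base := - ip (ym P1) ee.
Definition ym2 (u v : X) := hsub u (hscal X lam v).
Definition Wv2 (u v : X) (t : R) := hsub (hsub (hadd X u (hscal X lam v)) x1) (hscal X t ddv).
Lemma fz_eq (z : Zs) : fz z = - ip (ym2 (fst (fst z)) (snd (fst z))) ee + rr * snd z +
  kk * ip (Wv2 (fst (fst z)) (snd (fst z)) (snd z)) (Wv2 (fst (fst z)) (snd (fst z)) (snd z)).
Proof. reflexivity. Qed.

Lemma quad_low n : kk * (n * n) - 2 * n >= - (gap / 4).
Proof.
  assert (K := kk_pos). assert (G := gap_pos). unfold kk in *.
  assert (kk * (n * n) - 2 * n + / kk >= 0).
  { unfold kk. replace (4 / gap * (n * n) - 2 * n + / (4 / gap)) with ((4/gap) * (n - gap/4) * (n - gap/4)) by (field; lra).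
    assert (S0 : 0 <= (n - gap/4) * (n - gap/4)) by apply Rle_0_sqr.
    assert (S1 : 0 <= 4 / gap) by (apply Rlt_le, Rdiv_lt_0_compat; lra).
    apply Rle_ge. replace (4 / gap * (n - gap / 4) * (n - gap / 4)) with ((4/gap) * ((n - gap/4) * (n - gap/4))) by ring.
    apply Rmult_le_pos; auto. }
  unfold kk in H. replace (/ (4 / gap)) with (gap / 4) in H by (field; lra). lra.
Qed.

Lemma f_low_aux z : Omz z ->
  fz z >= base - 2 * nrm (hsub (xm (fst z)) x1) + kk * ip (Wv z) (Wv z).
Proof.
  intros [HT Ht]. unfold fz, base.
  assert (A : ip (ym (fst z)) ee = ip (ym P1) ee + ip (hsub (ym (fst z)) (ym P1)) ee) by (rewrite ip_subl; ring).
  assert (B := CS' X (hsub (ym (fst z)) (ym P1)) ee). rewrite ee_nrm in B.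
  assert (C := lip (fst z) P1 HT H1). fold x1 in C.
  assert (0 <= rr * snd z).
  { apply Rmult_le_pos; [|lra]. unfold rr. assert (K := nD_gt). assert (0 <= nd) by apply nrm_nonneg. lra. }
  lra.
Qed.

Lemma f_low z : Omz z -> fz z >= base - 2 * nd - gap / 4.
Proof.
  intro Hz. assert (A := f_low_aux z Hz). destruct Hz as [_ Ht].
  assert (E : hsub (xm (fst z)) x1 = hadd X (Wv z) (hscal X (snd z) ddv)).
  { apply ip_ext; intro w. unfold Wv. rewrite !ip_addl, !ip_subl, !ip_scall. ring. }
  assert (B : nrm (hsub (xm (fst z)) x1) <= nrm (Wv z) + nd).
  { rewrite E. eapply Rle_trans; [apply tri|]. rewrite nrm_scal_pos by lra. unfold nd.
    assert (0 <= nrm ddv) by apply nrm_nonneg. nra. }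
  assert (Q := quad_low (nrm (Wv z))). rewrite nrm_sq in Q. lra.
Qed.

Lemma f_low0 z : Omz z -> snd z = 0 -> fz z >= base - gap / 4.
Proof.
  intros Hz E0. assert (A := f_low_aux z Hz).
  assert (E : Wv z = hsub (xm (fst z)) x1).
  { apply ip_ext; intro w. unfold Wv. rewrite E0, !ip_subl, ip_scall. ring. }
  assert (Q := quad_low (nrm (Wv z))). rewrite nrm_sq in Q. rewrite E in Q. rewrite <- E in A. rewrite E in A.
  lra.
Qed.

Lemma f_P2 : fz ((u2, v2), 1) = base - gap.
Proof.
  unfold fz, base. simpl.
  assert (E : Wv ((u2,v2),1) = hzero X).
  { apply ip_ext; intro w. rewrite ip_0l. unfold Wv, ddv, x1, xm, P1, P2. simpl.
    rewrite !ip_subl, !ip_scall, !ip_subl, !ip_addl, !ip_scall. ring. }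
  rewrite E, ip_0l.
  assert (A : ip (ym P2) ee = ip (ym P1) ee + ip Dy ee) by (unfold Dy; rewrite ip_subl; ring).
  fold P2. rewrite A, ee_Dy. unfold gap, rr. lra.
Qed.


Lemma Zcomp1 (z l : Zs) : nrm (hsub (fst (fst z)) (fst (fst l))) <= nrm (hsub z l).
Proof. eapply Rle_trans; [apply (nrm_fst X X (fst z) (fst l))|apply (nrm_fst (prodH X X) Rspace)]. Qed.
Lemma Zcomp2 (z l : Zs) : nrm (hsub (snd (fst z)) (snd (fst l))) <= nrm (hsub z l).
Proof. eapply Rle_trans; [apply (nrm_snd X X (fst z) (fst l))|apply (nrm_fst (prodH X X) Rspace)]. Qed.
Lemma Zcomp3 (z l : Zs) : Rabs (snd z - snd l) <= nrm (hsub z l).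
Proof. assert (K := nrm_snd (prodH X X) Rspace z l). rewrite R_nrm in K. exact K. Qed.

Lemma Omz_closed : seqclosed Omz.
Proof.
  intros s l Hs Hc. split.
  - apply (seqclosed_gph X T Tcl (fun n => fst (s n))).
    + intro n. apply (Hs n).
    + apply (conv_fst (prodH X X) Rspace); auto.
  - apply (seqclosed_01 (fun n => snd (s n))).
    + intro n. apply (Hs n).
    + apply (conv_snd (prodH X X) Rspace); auto.
Qed.

Lemma fz_cont : forall s l, (forall n, Omz (s n)) -> Omz l -> conv s l -> Un_cv (fun n => fz (s n)) (fz l).
Proof.
  intros s l _ _ Hc. unfold fz. assert (L := lam_pos). assert (Hnd : 0 <= nd) by apply nrm_nonneg.
  apply CV_plus; [apply CV_plus|].
  - apply cv_opp'. apply conv_ip_const.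
    apply (conv_map (fun z : Zs => ym (fst z)) (1 + lam)); [lra| |auto].
    intro n. rewrite ym_diff. eapply Rle_trans; [apply nrm_sub_le|]. rewrite nrm_scal_pos by lra.
    assert (A := Zcomp1 (s n) l). assert (B := Zcomp2 (s n) l). nra.
  - apply CV_mult; [apply cv_const|]. apply convR. apply (conv_snd (prodH X X) Rspace); auto.
  - apply CV_mult; [apply cv_const|]. apply conv_nsq.
    apply (conv_map Wv (1 + lam + nd)); [lra| |auto].
    intro n.
    replace (hsub (Wv (s n)) (Wv l)) with
      (hsub (hadd X (hsub (fst (fst (s n))) (fst (fst l))) (hscal X lam (hsub (snd (fst (s n))) (snd (fst l)))))
            (hscal X (snd (s n) - snd l) ddv)).
    + eapply Rle_trans; [apply nrm_sub_le|]. eapply Rle_trans; [apply Rplus_le_compat_r; apply tri|].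
      rewrite nrm_scal_pos by lra. rewrite nrm_scal. fold nd.
      assert (A := Zcomp1 (s n) l). assert (B := Zcomp2 (s n) l). assert (C := Zcomp3 (s n) l).
      assert (0 <= Rabs (snd (s n) - snd l)) by apply Rabs_pos. nra.
    + apply ip_ext; intro w. unfold Wv, xm. ipl. ring.
Qed.

Lemma nsqZ (z c : Zs) : hinner Zs (hsub z c) (hsub z c) =
  ip (hsub (fst (fst z)) (fst (fst c))) (hsub (fst (fst z)) (fst (fst c))) +
  ip (hsub (snd (fst z)) (snd (fst c))) (hsub (snd (fst z)) (snd (fst c))) +
  (snd z - snd c) * (snd z - snd c).
Proof. reflexivity. Qed.

Lemma viol_false : False.
Proof.
  assert (L := lam_pos). assert (Hnd : 0 <= nd) by apply nrm_nonneg. assert (G := gap_pos).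
  assert (Kp := kk_pos).
  set (sg := Rmin 1 (gap * lam / (2 * (2*lam + (6 + 2*lam)*nd)))).
  assert (sg1 : sg <= 1) by apply Rmin_l.
  assert (sg2 : sg <= gap * lam / (2 * (2*lam + (6 + 2*lam)*nd))) by apply Rmin_r.
  assert (sg0 : 0 < sg) by (apply Rmin_pos; [lra|apply Rdiv_lt_0_compat; nra]).
  assert (sg3 : sg * (2 * (2*lam + (6 + 2*lam)*nd)) <= gap * lam).
  { apply Rmult_le_compat_r with (r := 2 * (2*lam + (6 + 2*lam)*nd)) in sg2; [|nra].
    replace (gap * lam / (2 * (2 * lam + (6 + 2 * lam) * nd)) * (2 * (2 * lam + (6 + 2 * lam) * nd)))
      with (gap * lam) in sg2 by (field; nra). lra. }
  destruct (SVP Zs Omz fz Omz_closed) with (sig := sg) (eta := gap / 4)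
    as [zb [c [Hzb [Hmin [Hc1 Hopt]]]]].
  - exists ((u1, v1), 0). split; simpl; [auto|lra].
  - exists (base - 2 * nd - gap / 4). intros z Hz. apply Rge_le, f_low; auto.
  - apply fz_cont.
  - lra.
  - lra.
  - assert (Hzb' := Hzb).
    destruct zb as [[ub vb] tb]. destruct c as [[ca cb] ct].
    destruct Hzb as [HTb Htb]. simpl in HTb, Htb.
    rewrite nsqZ in Hc1. simpl in Hc1.
    set (a := hsub ub ca) in *. set (b := hsub vb cb) in *.
    assert (Pa := nsq_nonneg X a). assert (Pb := nsq_nonneg X b).
    assert (Pt : 0 <= (tb - ct) * (tb - ct)) by apply Rle_0_sqr.
    assert (Na : nrm a <= 1) by (apply nrm_le1; lra).
    assert (Nb : nrm b <= 1) by (apply nrm_le1; lra).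
    assert (Nt : Rabs (tb - ct) <= 1).
    { apply Rnot_lt_le. intro Hl. assert (1 * 1 < Rabs (tb - ct) * Rabs (tb - ct)) by (apply Rmult_le_0_lt_compat; lra).
      rewrite <- Rabs_mult, Rabs_right in H by (apply Rle_ge, Rle_0_sqr). lra. }
    assert (Htb0 : tb > 0).
    { destruct (Rle_lt_or_eq_dec 0 tb) as [|E]; [lra|auto|].
      exfalso. assert (A := f_low0 _ Hzb' (eq_sym E)).
      assert (HO : Omz ((u2, v2), 1)) by (split; simpl; [auto|lra]).
      assert (B := Hopt ((u2, v2), 1) HO). rewrite f_P2 in B. lra. }
    set (wb := Wv2 ub vb tb).
    set (zz := hsub (hsub ee (hscal X (2*kk) wb)) (hscal X (2*sg) a)).
    set (ww := hadd X (hscal X lam (hadd X ee (hscal X (2*kk) wb))) (hscal X (2*sg) b)).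
    assert (Hreg : reg_coderiv T ub vb ww zz).
    { apply (reg_from_quad X (gph T) (ub, vb) (zz, hopp X ww) (2*kk*(1 + lam*lam) + sg)); [nra|].
      intros [u' v'] Hp. unfold gph in Hp. simpl in Hp.
      assert (HO : Omz ((u', v'), tb)) by (split; simpl; auto).
      assert (M := Hmin ((u', v'), tb) HO).
      rewrite !nsqZ, !fz_eq in M. simpl in M. fold a b wb in M.
      set (Du := hsub u' ub). set (Dv := hsub v' vb).
      assert (Ey : ip (ym2 u' v') ee = ip (ym2 ub vb) ee + ip ee Du - lam * ip ee Dv).
      { rewrite (hinner_sym X ee Du), (hinner_sym X ee Dv). unfold ym2, Du, Dv. ipl. ring. }
      assert (EW : Wv2 u' v' tb = hadd X wb (hadd X Du (hscal X lam Dv))).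
      { apply ip_ext; intro w. unfold wb, Wv2, Du, Dv. ipl. ring. }
      assert (Ea : hsub u' ca = hadd X a Du).
      { apply ip_ext; intro w. unfold a, Du. ipl. ring. }
      assert (Eb : hsub v' cb = hadd X b Dv).
      { apply ip_ext; intro w. unfold b, Dv. ipl. ring. }
      rewrite Ey, EW, Ea, Eb, (nsq_add X wb), (nsq_add X a), (nsq_add X b) in M.
      rewrite (ip_addr X wb Du (hscal X lam Dv)), (ip_scalr X lam wb Dv) in M.
      assert (Q : ip (hadd X Du (hscal X lam Dv)) (hadd X Du (hscal X lam Dv)) <= 2 * ip Du Du + 2 * lam * lam * ip Dv Dv).
      { assert (K := nsq_nonneg X (hsub Du (hscal X lam Dv))).
        rewrite nsq_sub in K. rewrite nsq_add. rewrite !ip_scall, !ip_scalr in *. lra. }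
      unfold pinner, psub. simpl. fold Du Dv.
      unfold zz, ww. rewrite ip_oppl. ipl.
      assert (PD := nsq_nonneg X Du). assert (PV := nsq_nonneg X Dv).
      assert (Q2 : kk * ip (hadd X Du (hscal X lam Dv)) (hadd X Du (hscal X lam Dv)) <=
                   kk * (2 * ip Du Du + 2 * lam * lam * ip Dv Dv)) by (apply Rmult_le_compat_l; lra).
      assert (0 <= kk * ip Dv Dv) by (apply Rmult_le_pos; lra).
      assert (0 <= kk * lam * lam * ip Du Du) by (apply Rmult_le_pos; [|lra]; apply Rmult_le_pos; [|lra]; apply Rmult_le_pos; lra).
      lra. }
    assert (HC := Tcond ub vb HTb ww zz Hreg).
    assert (Htd : 0 <= - rr + 2 * kk * ip wb ddv - 2 * sg * (tb - ct)).
    { apply (small_t' _ (kk * ip ddv ddv + sg) tb); auto.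
      - assert (K := nsq_nonneg X ddv). nra.
      - intros h Hh.
        assert (HO : Omz ((ub, vb), tb - h)) by (split; simpl; [auto|lra]).
        assert (M := Hmin ((ub, vb), tb - h) HO).
        rewrite !nsqZ, !fz_eq in M. simpl in M. fold a b wb in M.
        assert (EW : Wv2 ub vb (tb - h) = hadd X wb (hscal X h ddv)).
        { apply ip_ext; intro w. unfold wb, Wv2. ipl. ring. }
        rewrite EW, nsq_add, ip_scalr, ip_scall, ip_scalr in M.
        assert (0 <= h * (- rr + 2 * kk * ip wb ddv - 2 * sg * (tb - ct) + h * (kk * ip ddv ddv + sg))) by nra.
        apply Rmult_le_reg_l with h; [lra|]. lra. }
    set (Mm := 2 * kk * nrm wb).
    assert (HM0 : 0 <= Mm) by (unfold Mm; assert (0 <= nrm wb) by apply nrm_nonneg; nra).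
    assert (EM : 4 * kk * kk * ip wb wb = Mm * Mm) by (unfold Mm; rewrite <- (nrm_sq X wb); ring).
    set (E1 := hsub ee (hscal X (2*kk) wb)) in *.
    set (E2 := hadd X ee (hscal X (2*kk) wb)) in *.
    assert (NE1 : nrm E1 <= 1 + Mm).
    { unfold E1. eapply Rle_trans; [apply nrm_sub_le|]. rewrite ee_nrm, nrm_scal_pos by lra. unfold Mm. lra. }
    assert (NE2 : nrm E2 <= 1 + Mm).
    { unfold E2. eapply Rle_trans; [apply tri|]. rewrite ee_nrm, nrm_scal_pos by lra. unfold Mm. lra. }
    assert (Eip : ip zz ww = lam * (1 - Mm * Mm) + 2 * sg * ip E1 b - 2 * sg * lam * ip a E2 - 4 * sg * sg * ip a b).
    { unfold zz, ww. rewrite ip_subl, !ip_addr, !ip_scalr, !ip_scall.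
      replace (ip E1 E2) with (ip ee ee - 4 * kk * kk * ip wb wb).
      - rewrite ee_unit, EM. ring.
      - unfold E1, E2. rewrite ip_subl, !ip_addr, !ip_scall, !ip_scalr. rewrite (hinner_sym X wb ee). ring. }
    assert (B1 := CS' X E1 b). assert (B2 := CS'' X a E2). assert (B3 := CS'' X a b).
    assert (B4 := CS' X wb ddv). fold nd in B4.
    assert (Nw : 0 <= nrm wb) by apply nrm_nonneg.
    assert (NE1' : 0 <= nrm E1) by apply nrm_nonneg. assert (NE2' : 0 <= nrm E2) by apply nrm_nonneg.
    assert (Na' : 0 <= nrm a) by apply nrm_nonneg. assert (Nb' : 0 <= nrm b) by apply nrm_nonneg.
    assert (F1 : 0 <= lam * (1 - Mm * Mm) + 2 * sg * (1 + Mm) + 2 * sg * lam * (1 + Mm) + 4 * sg * sg).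
    { assert (ip E1 b <= 1 + Mm) by nra.
      assert (- ip a E2 <= 1 + Mm) by nra.
      assert (- ip a b <= 1) by nra.
      rewrite Eip in HC.
      assert (2 * sg * ip E1 b <= 2 * sg * (1 + Mm)) by (apply Rmult_le_compat_l; lra).
      assert (2 * sg * lam * - ip a E2 <= 2 * sg * lam * (1 + Mm)) by (apply Rmult_le_compat_l; nra).
      assert (4 * sg * sg * - ip a b <= 4 * sg * sg * 1) by (apply Rmult_le_compat_l; nra).
      lra. }
    assert (Ttc : - (tb - ct) <= 1) by (assert (K := Rle_abs (- (tb - ct))); rewrite Rabs_Ropp in K; lra).
    assert (F2 : rr <= Mm * nd + 2 * sg).
    { assert (2 * kk * ip wb ddv <= Mm * nd) by (unfold Mm; nra). nra. }
    assert (Err : rr = nd + gap) by (unfold rr, gap; field).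
    assert (F3 : gap - 2 * sg <= (Mm - 1) * nd) by nra.
    assert (S5 : 0 <= sg * ((6 + 2*lam) * nd)) by (apply Rmult_le_pos; nra).
    assert (S4 : 4 * sg * lam <= gap * lam) by lra.
    assert (F4 : gap - 2 * sg > 0).
    { assert (4 * sg <= gap) by (apply Rmult_le_reg_r with lam; lra). lra. }
    assert (HM1 : Mm > 1).
    { apply Rnot_le_lt. intro Hle. assert ((Mm - 1) * nd <= 0) by nra. lra. }
    assert (F5 : lam * (Mm - 1) <= sg * (6 + 2 * lam)).
    { assert (4 * sg * sg <= 4 * sg * (Mm + 1)) by nra.
      assert (lam * (Mm - 1) * (Mm + 1) <= (Mm + 1) * (sg * (6 + 2 * lam))) by nra.
      apply Rmult_le_reg_r with (Mm + 1); [lra|]. lra. }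
    assert (F6 : lam * (gap - 2 * sg) <= sg * (6 + 2 * lam) * nd).
    { assert (lam * (gap - 2 * sg) <= lam * ((Mm - 1) * nd)) by (apply Rmult_le_compat_l; lra).
      assert (lam * (Mm - 1) * nd <= sg * (6 + 2 * lam) * nd) by (apply Rmult_le_compat_r; lra).
      lra. }
    assert (lam * gap > 0) by nra.
    lra.
Qed.

End Viol.

Lemma mono_of : monotone T.
Proof.
  intros u1 v1 u2 v2 H1 H2. apply Rnot_lt_le. intro Hn. exact (viol_false u1 v1 u2 v2 H1 H2 Hn).
Qed.

End Mono.



Section Surj.
Variable X : HilbertSpace.
Variable T : X -> X -> Prop.
Hypothesis Tcl : closed_pset (gph T).
Hypothesis Tp : proper T.
Hypothesis Tmono : monotone T.
Hypothesis Tcond : forall u v, T u v -> forall w z, reg_coderiv T u v w z -> 0 <= hinner X z w.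
Local Notation ip := (hinner X).

Lemma approx x0 sg : 0 < sg <= 1 -> exists a b, T a b /\ nrm (hsub (hadd X a b) x0) <= 3 * sg.
Proof.
  intros Hsg.
  set (f := fun p : prodH X X => ip (hsub (hadd X (fst p) (snd p)) x0) (hsub (hadd X (fst p) (snd p)) x0)).
  destruct (SVP (prodH X X) (gph T) f (seqclosed_gph X T Tcl)) with (sig := sg) (eta := 1)
    as [pb [c [Hpb [Hmin [Hc1 _]]]]].
  - destruct Tp as [a [b Hab]]. exists (a, b). exact Hab.
  - exists 0. intros z _. apply nsq_nonneg.
  - intros s l _ _ Hc. unfold f. apply conv_nsq.
    apply (conv_map (fun p : prodH X X => hsub (hadd X (fst p) (snd p)) x0) 2); [lra| |auto].
    intro n. replace (hsub (hsub (hadd X (fst (s n)) (snd (s n))) x0) (hsub (hadd X (fst l) (snd l)) x0))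
      with (hadd X (hsub (fst (s n)) (fst l)) (hsub (snd (s n)) (snd l))).
    + eapply Rle_trans; [apply tri|]. assert (A := nrm_fst X X (s n) l). assert (B := nrm_snd X X (s n) l). lra.
    + apply ip_ext; intro w. ipl. ring.
  - lra.
  - lra.
  - destruct pb as [ub vb]. destruct c as [ca cb]. unfold gph in Hpb. simpl in Hpb.
    change (ip (hsub ub ca) (hsub ub ca) + ip (hsub vb cb) (hsub vb cb) <= 1) in Hc1.
    set (a := hsub ub ca) in *. set (b := hsub vb cb) in *.
    set (e := hsub (hadd X ub vb) x0).
    set (zz := hscal X (-2) (hadd X e (hscal X sg a))).
    set (ww := hscal X 2 (hadd X e (hscal X sg b))).
    assert (Hreg : reg_coderiv T ub vb ww zz).
    { apply (reg_from_quad X (gph T) (ub, vb) (zz, hopp X ww) (2 + sg)); [lra|].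
      intros [u' v'] Hp. unfold gph in Hp. simpl in Hp.
      assert (M := Hmin (u', v') Hp). unfold f in M. simpl in M.
      change (ip (hsub (hadd X ub vb) x0) (hsub (hadd X ub vb) x0) +
              sg * (ip (hsub ub ca) (hsub ub ca) + ip (hsub vb cb) (hsub vb cb)) <=
              ip (hsub (hadd X u' v') x0) (hsub (hadd X u' v') x0) +
              sg * (ip (hsub u' ca) (hsub u' ca) + ip (hsub v' cb) (hsub v' cb))) in M.
      fold a b e in M.
      set (Du := hsub u' ub). set (Dv := hsub v' vb).
      assert (E1 : hsub (hadd X u' v') x0 = hadd X e (hadd X Du Dv)).
      { apply ip_ext; intro w. unfold e, Du, Dv. ipl. ring. }
      assert (Ea : hsub u' ca = hadd X a Du) by (apply ip_ext; intro w; unfold a, Du; ipl; ring).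
      assert (Eb : hsub v' cb = hadd X b Dv) by (apply ip_ext; intro w; unfold b, Dv; ipl; ring).
      rewrite E1, Ea, Eb, (nsq_add X e), (nsq_add X a), (nsq_add X b), (ip_addr X e Du Dv) in M.
      assert (Q : ip (hadd X Du Dv) (hadd X Du Dv) <= 2 * ip Du Du + 2 * ip Dv Dv).
      { assert (K := nsq_nonneg X (hsub Du Dv)). rewrite nsq_sub in K. rewrite nsq_add. lra. }
      unfold pinner, psub. simpl. fold Du Dv.
      unfold zz, ww. rewrite ip_oppl. ipl.
      assert (PD := nsq_nonneg X Du). assert (PV := nsq_nonneg X Dv).
      assert (0 <= sg * ip Du Du) by (apply Rmult_le_pos; lra).
      assert (0 <= sg * ip Dv Dv) by (apply Rmult_le_pos; lra).
      lra. }
    assert (HC := Tcond ub vb Hpb ww zz Hreg).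
    unfold zz, ww in HC. rewrite ip_scall, ip_scalr, !ip_addl, !ip_addr, !ip_scall, !ip_scalr in HC.
    exists ub, vb. split; auto. fold e.
    assert (Pa := nsq_nonneg X a). assert (Pb := nsq_nonneg X b).
    assert (Na : nrm a <= 1) by (apply nrm_le1; lra).
    assert (Nb : nrm b <= 1) by (apply nrm_le1; lra).
    assert (B1 := CS'' X e b). assert (B2 := CS'' X a e). assert (B3 := CS'' X a b).
    assert (Ne := nrm_nonneg X e). assert (Na' := nrm_nonneg X a). assert (Nb' := nrm_nonneg X b).
    rewrite <- (nrm_sq X e) in HC.
    assert (- ip e b <= nrm e) by nra. assert (- ip a e <= nrm e) by nra. assert (- ip a b <= 1) by nra.
    assert (HH : nrm e * nrm e <= 2 * sg * nrm e + sg * sg).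
    { assert (0 <= - (nrm e * nrm e + sg * ip e b + sg * ip a e + sg * sg * ip a b)) by lra.
      assert (sg * - ip e b <= sg * nrm e) by (apply Rmult_le_compat_l; lra).
      assert (sg * - ip a e <= sg * nrm e) by (apply Rmult_le_compat_l; lra).
      assert (sg * sg * - ip a b <= sg * sg * 1) by (apply Rmult_le_compat_l; nra).
      lra. }
    apply Rnot_lt_le. intro Hgt.
    assert (3 * sg * nrm e < nrm e * nrm e) by nra.
    assert (sg * sg < sg * nrm e) by nra.
    lra.
Qed.

Lemma surj x0 : exists a b, T a b /\ hadd X a b = x0.
Proof.
  assert (Hex : forall k : nat, exists p : X * X, T (fst p) (snd p) /\
     nrm (hsub (hadd X (fst p) (snd p)) x0) <= 3 * (/2)^k).
  { intro k. destruct (approx x0 ((/2)^k)) as [a [b [Hab Hn]]].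
    - split; [apply pow_lt; lra|apply pow_le1; lra].
    - exists (a, b). simpl. auto. }
  set (sq := fun k => proj1_sig (constructive_indefinite_description _ (Hex k))).
  assert (Hsq : forall k, T (fst (sq k)) (snd (sq k)) /\ nrm (hsub (hadd X (fst (sq k)) (snd (sq k))) x0) <= 3 * (/2)^k).
  { intro k. unfold sq. destruct (constructive_indefinite_description _ _). simpl. auto. }
  assert (Hd : forall k j, ip (hsub (fst (sq k)) (fst (sq j))) (hsub (fst (sq k)) (fst (sq j))) +
                       ip (hsub (snd (sq k)) (snd (sq j))) (hsub (snd (sq k)) (snd (sq j))) <=
                       (3 * (/2)^k + 3 * (/2)^j) * (3 * (/2)^k + 3 * (/2)^j)).
  { intros k j. destruct (Hsq k) as [Tk Nk]. destruct (Hsq j) as [Tj Nj].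
    assert (M := Tmono _ _ _ _ Tk Tj).
    set (Da := hsub (fst (sq k)) (fst (sq j))) in *. set (Db := hsub (snd (sq k)) (snd (sq j))) in *.
    assert (E : hadd X Da Db = hsub (hsub (hadd X (fst (sq k)) (snd (sq k))) x0) (hsub (hadd X (fst (sq j)) (snd (sq j))) x0)).
    { apply ip_ext; intro w. unfold Da, Db. ipl. ring. }
    assert (N2 : nrm (hadd X Da Db) <= 3 * (/2)^k + 3 * (/2)^j).
    { rewrite E. eapply Rle_trans; [apply nrm_sub_le|]. lra. }
    assert (N3 : ip (hadd X Da Db) (hadd X Da Db) <= (3 * (/2)^k + 3 * (/2)^j) * (3 * (/2)^k + 3 * (/2)^j)).
    { rewrite <- nrm_sq. assert (K := nrm_nonneg X (hadd X Da Db)). nra. }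
    rewrite nsq_add in N3. rewrite (hinner_sym X Db Da) in M. lra. }
  assert (Hstep : forall (g : X * X -> X), (forall p q : X * X, ip (hsub (g p) (g q)) (hsub (g p) (g q)) <=
        ip (hsub (fst p) (fst q)) (hsub (fst p) (fst q)) + ip (hsub (snd p) (snd q)) (hsub (snd p) (snd q))) ->
     forall k, nrm (hsub (g (sq (S k))) (g (sq k))) <= 5 * (/2)^k).
  { intros g Hg k. unfold nrm. apply sqrt_le_sq; [assert (0 < (/2)^k) by (apply pow_lt; lra); lra|].
    eapply Rle_trans; [apply Hg|]. eapply Rle_trans; [apply Hd|]. simpl.
    assert (0 < (/2)^k) by (apply pow_lt; lra). nra. }
  destruct (geom_cauchy X (fun k => fst (sq k)) 5) as [la [Hla Bla]]; [lra| |].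
  { apply (Hstep fst). intros p q. assert (K := nsq_nonneg X (hsub (snd p) (snd q))). lra. }
  destruct (geom_cauchy X (fun k => snd (sq k)) 5) as [lb [Hlb Blb]]; [lra| |].
  { apply (Hstep snd). intros p q. assert (K := nsq_nonneg X (hsub (fst p) (fst q))). lra. }
  assert (HT : T la lb).
  { apply (seqclosed_gph X T Tcl sq (la, lb)); [intro n; apply Hsq|].
    apply conv_pair; simpl; auto. }
  exists la, lb. split; auto.
  apply nrm_zero_eq. apply Rle_antisym; [|apply nrm_nonneg].
  apply Rnot_lt_le. intro Hpos.
  assert (Hb : forall k, nrm (hsub (hadd X la lb) x0) <= 23 * (/2)^k).
  { intro k. destruct (Hsq k) as [_ Nk].
    replace (hsub (hadd X la lb) x0) with
      (hadd X (hsub (hadd X la lb) (hadd X (fst (sq k)) (snd (sq k)))) (hsub (hadd X (fst (sq k)) (snd (sq k))) x0)).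
    - eapply Rle_trans; [apply tri|].
      replace (hsub (hadd X la lb) (hadd X (fst (sq k)) (snd (sq k)))) with
        (hadd X (hsub la (fst (sq k))) (hsub lb (snd (sq k)))).
      + assert (T1 := tri X (hsub la (fst (sq k))) (hsub lb (snd (sq k)))).
        assert (A := Bla k). assert (B := Blb k). simpl in A, B.
        rewrite nrm_sub_sym in A, B. lra.
      + apply ip_ext; intro w. ipl. ring.
    - apply ip_ext; intro w. ipl. ring. }
  destruct (half_pow_small (nrm (hsub (hadd X la lb) x0) / 23)) as [N HN].
  { apply Rdiv_lt_0_compat; lra. }
  specialize (HN N (le_n _)). specialize (Hb N).
  assert (23 * (/2)^N < nrm (hsub (hadd X la lb) x0)).
  { apply Rmult_lt_compat_l with (r := 23) in HN; [|lra].
    replace (23 * (nrm (hsub (hadd X la lb) x0) / 23)) with (nrm (hsub (hadd X la lb) x0)) in HN by field. lra. }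
  lra.
Qed.

Lemma maximal_of : maximal_monotone T.
Proof.
  split; auto. intros S HS HTS u v. split; [|apply HTS].
  intro Suv. destruct (surj (hadd X u v)) as [a [b [Hab E]]].
  assert (M := HS _ _ _ _ Suv (HTS _ _ Hab)).
  assert (E2 : hsub u a = hsub b v).
  { apply ip_ext; intro w. assert (K := f_equal (fun y => ip y w) E). simpl in K. ipl. rewrite !ip_addl in K. lra. }
  rewrite E2 in M.
  assert (Ev : v = b).
  { apply nrm_zero_eq. apply Rle_antisym; [|apply nrm_nonneg].
    assert (ip (hsub v b) (hsub b v) = - ip (hsub v b) (hsub v b)).
    { rewrite !ip_subl, !ip_subr, (hinner_sym X b v). ring. }
    assert (ip (hsub v b) (hsub v b) <= 0) by lra.
    unfold nrm. rewrite <- sqrt_0. apply sqrt_le_1_alt. auto. }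
  subst b.
  assert (Eu : u = a).
  { apply sub_zero_eq. rewrite E2. apply hinner_def. rewrite ip_subl, !ip_subr. ring. }
  subst a. auto.
Qed.

End Surj.

Theorem theorem3p2 (X : HilbertSpace) (T : X -> X -> Prop) :
  proper T -> closed_pset (gph T) ->
  (maximal_monotone T <->
   (hypomonotone T /\
    forall u v, T u v -> forall w z, reg_coderiv T u v w z -> 0 <= hinner X z w)).
Proof.
  intros Hp Hcl. split.
  - intro Hm. apply dir1; auto.
  - intros [[r [Hr Hh]] Hc]. exact (maximal_of X T Hcl Hp (mono_of X T Hcl r Hr Hh Hc) Hc).
Qed.
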